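(* Let $f, g \in \mathrm{Inj}(\Omega)$ each have at least one infinite cycle. Then $f \approx_{\mathrm{fin}} g$ if and only if $f = hh_1gh_2h^{-1}$ for some $h \in \mathrm{Sym}(\Omega)$ and $h_1, h_2 \in \mathrm{Fin}(\Omega)$.
   Context: $\Omega$ is a countably infinite set; maps are written on the right and composed left to right. $\mathrm{Inj}(\Omega)$ is the monoid of injective maps $\Omega\to\Omega$, $\mathrm{Sym}(\Omega)$ the permutation group, $\mathrm{Fin}(\Omega)$ the permutations moving only finitely many points. For $f\in\mathrm{Inj}(\Omega)$, a cycle of $f$ is a nonempty $\Sigma\subseteq\Omega$ such that (a) for all $\alpha\in\Omega$, $(\alpha)f\in\Sigma$ iff $\alpha\in\Sigma$, and (b) no proper nonempty subset of $\Sigma$ satisfies (a). A forward cycle is an infinite cycle $\Sigma$ with $\Sigma\setminus(\Omega)f\ne\emptyset$; an open cycle is an infinite cycle that is not forward. For $n\in\mathbb{Z}_+$, $(f)\mathrm{C}_n$ is the cardinal number of cycles of $f$ of cardinality $n$; $(f)\mathrm{C}_{\mathrm{open}}$, $(f)\mathrm{C}_{\mathrm{fwd}}$ are the numbers of open and forward cycles. $f\approx_{\mathrm{fin}}g$ means: $(f)\mathrm{C}_{\mathrm{open}}=(g)\mathrm{C}_{\mathrm{open}}$; $(f)\mathrm{C}_{\mathrm{fwd}}=(g)\mathrm{C}_{\mathrm{fwd}}$; $(f)\mathrm{C}_n\ne(g)\mathrm{C}_n$ for only finitely many $n\in\mathbb{Z}_+$; and whenever $(f)\mathrm{C}_n\ne(g)\mathrm{C}_n$,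 both are finite. *)

(* Defs.v *)
(* Sets of points are predicates [Ω -> Prop]; sets are compared
   extensionally ([seteq]), and cardinalities of families of cycles are compared
   up to extensional equality of the cycles. *)
From Stdlib Require Import List Arith.

Definition injective {X Y : Type} (f : X -> Y) : Prop :=
  forall a b, f a = f b -> a = b.

Definition countably_infinite (X : Type) : Prop :=
  exists e : X -> nat, injective e /\ (forall n, exists a, e a = n).

Definition seteq {X : Type} (S T : X -> Prop) : Prop := forall a, S a <-> T a.

Definition finite_set {X : Type} (S : X -> Prop) : Prop :=
  exists l : list X, forall a, S a -> In a l.

Definition has_card {X : Type} (S : X -> Prop) (n : nat) : Prop :=
  exists l : list X, NoDup l /\ length l = n /\ (forall a, S a <-> In a l).

Definition invariant {X : Type} (f : X -> X) (S : X -> Prop) : Prop :=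
  forall a, S (f a) <-> S a.

Definition is_cycle {X : Type} (f : X -> X) (S : X -> Prop) : Prop :=
  (exists a, S a) /\ invariant f S /\
  (forall T : X -> Prop, (exists a, T a) -> (forall a, T a -> S a) ->
     invariant f T -> seteq T S).

Definition infinite_cycle {X : Type} (f : X -> X) (S : X -> Prop) : Prop :=
  is_cycle f S /\ ~ finite_set S.

Definition forward_cycle {X : Type} (f : X -> X) (S : X -> Prop) : Prop :=
  infinite_cycle f S /\ (exists a, S a /\ forall b, f b <> a).

Definition open_cycle {X : Type} (f : X -> X) (S : X -> Prop) : Prop :=
  infinite_cycle f S /\ ~ (exists a, S a /\ forall b, f b <> a).

Definition cycle_of_size {X : Type} (f : X -> X) (n : nat) (S : X -> Prop) : Prop :=
  is_cycle f S /\ has_card S n.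

Definition equipotent {X : Type} (P Q : (X -> Prop) -> Prop) : Prop :=
  exists F : (X -> Prop) -> (X -> Prop),
    (forall S, P S -> Q (F S)) /\
    (forall S S', P S -> P S' -> seteq (F S) (F S') -> seteq S S') /\
    (forall T, Q T -> exists S, P S /\ seteq (F S) T).

Definition finite_family {X : Type} (P : (X -> Prop) -> Prop) : Prop :=
  exists l : list (X -> Prop), forall S, P S -> exists T, In T l /\ seteq S T.

Definition approx_fin {X : Type} (f g : X -> X) : Prop :=
  equipotent (open_cycle f) (open_cycle g) /\
  equipotent (forward_cycle f) (forward_cycle g) /\
  (exists N, forall n, N <= n -> equipotent (cycle_of_size f n) (cycle_of_size g n)) /\
  (forall n, 1 <= n -> ~ equipotent (cycle_of_size f n) (cycle_of_size g n) ->
     finite_family (cycle_of_size f n) /\ finite_family (cycle_of_size g n)).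

Definition fin_perm {X : Type} (h : X -> X) : Prop :=
  (exists hinv : X -> X, (forall a, hinv (h a) = a) /\ (forall a, h (hinv a) = a)) /\
  finite_set (fun a => h a <> a).

(* Main.v *)
Require Import Defs.
From Stdlib Require Import List Arith Lia Classical ClassicalEpsilon FunctionalExtensionality PropExtensionality.
Import ListNotations.

Fixpoint it {X : Type} (f : X -> X) (n : nat) (a : X) : X :=
  match n with 0 => a | S n => f (it f n a) end.

Lemma it_add {X} (f : X -> X) m n a : it f (m + n) a = it f m (it f n a).
Proof. induction m; simpl; congruence. Qed.

Lemma it_S' {X} (f : X -> X) n a : it f n (f a) = f (it f n a).
Proof. induction n; simpl; congruence. Qed.

Lemma it_S2 {X} (f : X -> X) n a : it f (S n) a = it f n (f a).
Proof. rewrite it_S'; reflexivity. Qed.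

Lemma it_inj {X} (f : X -> X) n : injective f -> injective (it f n).
Proof. intros Hf; induction n; simpl; intros a b H; auto. Qed.



Lemma it_comm {X} (f : X -> X) m n a : it f m (it f n a) = it f n (it f m a).
Proof. rewrite <- !it_add, Nat.add_comm; reflexivity. Qed.

Lemma it_cancel {X} (f : X -> X) m n k a b : injective f ->
  it f k (it f m a) = it f k (it f n b) -> it f m a = it f n b.
Proof. intros Hf H. exact (it_inj f k Hf _ _ H). Qed.

Definition conn {X} (f : X -> X) (a b : X) : Prop := exists m n, it f m a = it f n b.
Definition cyc {X} (f : X -> X) (a : X) : X -> Prop := fun b => conn f a b.

Lemma conn_refl {X} (f : X -> X) a : conn f a a.
Proof. exists 0, 0; reflexivity. Qed.

Lemma conn_sym {X} (f : X -> X) a b : conn f a b -> conn f b a.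
Proof. intros [m [n H]]; exists n, m; auto. Qed.

Lemma conn_trans {X} (f : X -> X) a b c : conn f a b -> conn f b c -> conn f a c.
Proof.
  intros [m [n H]] [p [q H']]. exists (p + m), (n + q).
  rewrite !it_add, H, it_comm, H', it_comm; reflexivity.
Qed.

Lemma conn_it {X} (f : X -> X) a n : conn f a (it f n a).
Proof. exists n, 0; reflexivity. Qed.

Lemma conn_f {X} (f : X -> X) a : conn f a (f a).
Proof. exact (conn_it f a 1). Qed.

Lemma seteq_eq {X} (S T : X -> Prop) : seteq S T -> S = T.
Proof. intros H; apply functional_extensionality; intros a; apply propositional_extensionality; auto. Qed.

Lemma cyc_eq {X} (f : X -> X) a b : conn f a b -> cyc f a = cyc f b.
Proof.
  intros H; apply seteq_eq; intros c; unfold cyc; split; intros H'.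
  - eapply conn_trans; [apply conn_sym; eauto|eauto].
  - eapply conn_trans; eauto.
Qed.

Lemma cyc_invariant {X} (f : X -> X) a : invariant f (cyc f a).
Proof.
  intros b; unfold cyc; split; intros H.
  - eapply conn_trans; [exact H| apply conn_sym, conn_f].
  - eapply conn_trans; [exact H| apply conn_f].
Qed.

Lemma invariant_it {X} (f : X -> X) S : invariant f S -> forall n a, S (it f n a) <-> S a.
Proof. intros H n; induction n; simpl; intros a; [tauto|]. rewrite (H (it f n a)); auto. Qed.

Lemma invariant_conn {X} (f : X -> X) S a b : invariant f S -> conn f a b -> S a -> S b.
Proof.
  intros HS [m [n H]] Ha. apply (invariant_it f S HS n). rewrite <- H.
  apply (invariant_it f S HS m); auto.
Qed.

Lemma cyc_is_cycle {X} (f : X -> X) a : is_cycle f (cyc f a).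
Proof.
  split; [exists a; apply conn_refl|split; [apply cyc_invariant|]].
  intros T [b Tb] Hsub HT c; split; [apply Hsub|].
  intros Hc. apply (invariant_conn f T b c HT); auto.
  eapply conn_trans; [apply conn_sym, Hsub, Tb| exact Hc].
Qed.

Lemma is_cycle_cyc {X} (f : X -> X) S a : is_cycle f S -> S a -> S = cyc f a.
Proof.
  intros [_ [HS Hmin]] Ha.
  assert (Hsub : forall b, cyc f a b -> S b) by (intros b Hb; eapply invariant_conn; eauto).
  symmetry; apply seteq_eq, Hmin; auto. exists a; apply conn_refl. apply cyc_invariant.
Qed.

Lemma cycle_iff {X} (f : X -> X) S : is_cycle f S <-> exists a, S a /\ S = cyc f a.
Proof.
  split.
  - intros H. destruct H as [[a Ha] HH]. exists a; split; auto. apply is_cycle_cyc; auto. split; auto; exists a; auto.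
  - intros [a [_ ->]]; apply cyc_is_cycle.
Qed.

Lemma cycles_disjoint {X} (f : X -> X) S T a : is_cycle f S -> is_cycle f T -> S a -> T a -> S = T.
Proof. intros HS HT Sa Ta. rewrite (is_cycle_cyc f S a), (is_cycle_cyc f T a); auto. Qed.

Lemma nat_min (P : nat -> Prop) : (exists n, P n) -> exists n, P n /\ forall m, m < n -> ~ P m.
Proof.
  intros [n Hn]. induction n as [n IH] using (well_founded_induction lt_wf).
  destruct (classic (exists m, m < n /\ P m)) as [[m [Hm Pm]]|Hno].
  - apply (IH m Hm Pm).
  - exists n; split; auto. intros m Hm Pm; apply Hno; eauto.
Qed.

Lemma it_period_diff {X} (f : X -> X) a m n : injective f -> m < n -> it f m a = it f n a ->
  it f (n - m) a = a.
Proof.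
  intros Hf Hmn H. replace n with ((n - m) + m) in H by lia. rewrite it_add, it_comm in H.
  symmetry; exact (it_inj f m Hf _ _ H).
Qed.

Lemma it_period_mult {X} (f : X -> X) a p k : it f p a = a -> it f (k * p) a = a.
Proof. intros H; induction k; simpl; auto. rewrite it_add, IHk; auto. Qed.

Lemma it_period_mod {X} (f : X -> X) a p n : 0 < p -> it f p a = a -> it f n a = it f (n mod p) a.
Proof.
  intros Hp H. rewrite (Nat.div_mod_eq n p) at 1. rewrite Nat.add_comm, it_add, Nat.mul_comm, it_period_mult; auto.
Qed.

Lemma NoDup_map_inj {A B} (g : A -> B) (l : list A) :
  (forall x y, In x l -> In y l -> g x = g y -> x = y) -> NoDup l -> NoDup (map g l).
Proof.
  induction l as [|x l IH]; simpl; intros Hinj Hnd; constructor.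
  - inversion Hnd; subst. intros Hin. apply in_map_iff in Hin as [y [Hy Hyl]].
    assert (y = x) by (apply Hinj; auto). subst; contradiction.
  - inversion Hnd; subst. apply IH; auto.
Qed.

Definition noper {X} (f : X -> X) (a : X) : Prop := forall p, 0 < p -> it f p a <> a.

Lemma noper_inj {X} (f : X -> X) a i j : injective f -> noper f a -> it f i a = it f j a -> i = j.
Proof.
  intros Hf Hn H. destruct (lt_eq_lt_dec i j) as [[Hl|He]|Hl]; auto.
  - exfalso; apply (Hn (j - i)); [lia|]. apply it_period_diff; auto.
  - exfalso; apply (Hn (i - j)); [lia|]. apply it_period_diff; auto.
Qed.

Lemma finite_list_bound {X} (g : nat -> X) (l : list X) :
  (forall i j, g i = g j -> i = j) -> (forall i, In (g i) l) -> False.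
Proof.
  intros Hinj Hin.
  assert (Hnd : NoDup (map g (seq 0 (S (length l))))).
  { apply NoDup_map_inj; auto. apply seq_NoDup. }
  assert (Hincl : incl (map g (seq 0 (S (length l)))) l).
  { intros x Hx. apply in_map_iff in Hx as [i [<- _]]. auto. }
  pose proof (NoDup_incl_length Hnd Hincl). rewrite length_map, length_seq in H. lia.
Qed.

Lemma finite_cyc_period {X} (f : X -> X) a : injective f -> finite_set (cyc f a) ->
  exists p, 0 < p /\ it f p a = a.
Proof.
  intros Hf [l Hl]. apply NNPP; intros Hno.
  apply (finite_list_bound (fun i => it f i a) l).
  - intros i j; apply noper_inj; auto. intros p Hp Hpa; apply Hno; eauto.
  - intros i; apply Hl, conn_it.
Qed.

Definition minper {X} (f : X -> X) (a : X) (p : nat) : Prop :=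
  0 < p /\ it f p a = a /\ forall q, 0 < q -> q < p -> it f q a <> a.

Lemma minper_exists {X} (f : X -> X) a : (exists p, 0 < p /\ it f p a = a) -> exists p, minper f a p.
Proof.
  intros H. destruct (nat_min (fun p => 0 < p /\ it f p a = a) H) as [p [[H1 H2] H3]].
  exists p; repeat split; auto. intros q Hq Hqp Heq; apply (H3 q Hqp); auto.
Qed.

Lemma minper_unique {X} (f : X -> X) a p q : minper f a p -> minper f a q -> p = q.
Proof.
  intros [H1 [H2 H3]] [H4 [H5 H6]]. destruct (lt_eq_lt_dec p q) as [[Hl|He]|Hl]; auto.
  - exfalso; apply (H6 p); auto.
  - exfalso; apply (H3 q); auto.
Qed.

Lemma period_conn {X} (f : X -> X) a b p : injective f -> it f p a = a -> conn f a b -> it f p b = b.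
Proof.
  intros Hf Hp [m [n H]]. apply (it_inj f n Hf). rewrite it_comm, <- H, it_comm, Hp; auto.
Qed.

Lemma period_cyc {X} (f : X -> X) a p : injective f -> 0 < p -> it f p a = a ->
  forall b, cyc f a b <-> exists i, i < p /\ b = it f i a.
Proof.
  intros Hf Hp Ha b; split.
  - intros Hb. pose proof (period_conn f a b p Hf Ha Hb) as Hbp. destruct Hb as [m [n H]].
    exists ((n * p - n + m) mod p). split; [apply Nat.mod_upper_bound; lia|].
    rewrite <- it_period_mod; auto.
    rewrite it_add, H, <- it_add. replace (n * p - n + n) with (n * p).
    + symmetry; apply it_period_mult; auto.
    + destruct n; [lia|]. simpl. nia.
  - intros [i [_ ->]]. apply conn_it.
Qed.

Lemma minper_card {X} (f : X -> X) a p : injective f -> minper f a p -> has_card (cyc f a) p.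
Proof.
  intros Hf [Hp [Ha Hmin]]. exists (map (fun i => it f i a) (seq 0 p)). repeat split.
  - apply NoDup_map_inj; [|apply seq_NoDup]. intros i j Hi Hj Heq.
    apply in_seq in Hi; apply in_seq in Hj.
    destruct (lt_eq_lt_dec i j) as [[Hl|He]|Hl]; auto.
    + exfalso; apply (Hmin (j - i)); try lia. apply it_period_diff; auto.
    + exfalso; apply (Hmin (i - j)); try lia. apply it_period_diff; auto.
  - rewrite length_map, length_seq; auto.
  - intros H. apply (period_cyc f a p Hf Hp Ha) in H as [i [Hi ->]].
    apply (in_map (fun i => it f i a)); apply in_seq; lia.
  - intros H. apply in_map_iff in H as [i [<- _]]. apply conn_it.
Qed.

Lemma has_card_unique {X} (S : X -> Prop) n m : has_card S n -> has_card S m -> n = m.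
Proof.
  intros [l [Hl [Hn HS]]] [l' [Hl' [Hm HS']]].
  assert (length l <= length l') by (apply NoDup_incl_length; auto; intros x Hx; apply HS', HS; auto).
  assert (length l' <= length l) by (apply NoDup_incl_length; auto; intros x Hx; apply HS, HS'; auto).
  lia.
Qed.

Lemma has_card_finite {X} (S : X -> Prop) n : has_card S n -> finite_set S.
Proof. intros [l [_ [_ H]]]; exists l; intros a; apply H. Qed.

Lemma noper_infinite {X} (f : X -> X) a : injective f -> noper f a -> ~ finite_set (cyc f a).
Proof.
  intros Hf Hn Hfin. destruct (finite_cyc_period f a Hf Hfin) as [p [Hp Hpa]]. apply (Hn p); auto.
Qed.

Lemma period_finite {X} (f : X -> X) a p : injective f -> 0 < p -> it f p a = a -> finite_set (cyc f a).
Proof.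
  intros Hf Hp Ha. exists (map (fun i => it f i a) (seq 0 p)). intros b Hb.
  apply (period_cyc f a p Hf Hp Ha) in Hb as [i [Hi ->]]. apply (in_map (fun i => it f i a)), in_seq; lia.
Qed.

Lemma infinite_noper {X} (f : X -> X) a : injective f -> ~ finite_set (cyc f a) -> noper f a.
Proof. intros Hf H p Hp Hpa. apply H; eapply period_finite; eauto. Qed.

Lemma noper_conn {X} (f : X -> X) a b : injective f -> noper f a -> conn f a b -> noper f b.
Proof.
  intros Hf Hn Hc p Hp Hpb. apply (Hn p Hp). apply (period_conn f b a p Hf Hpb). apply conn_sym; auto.
Qed.

Lemma size_cycle_iff {X} (f : X -> X) n S : injective f ->
  cycle_of_size f n S <-> exists a, S = cyc f a /\ minper f a n.
Proof.
  intros Hf; split.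
  - intros [HS Hc]. apply cycle_iff in HS as [a [Sa ->]]. exists a; split; auto.
    destruct (finite_cyc_period f a Hf (has_card_finite _ _ Hc)) as [p Hp].
    destruct (minper_exists f a (ex_intro _ p Hp)) as [q Hq].
    rewrite (has_card_unique _ _ _ Hc (minper_card f a q Hf Hq)); auto.
  - intros [a [-> Ha]]. split; [apply cyc_is_cycle| apply minper_card; auto].
Qed.

Definition fcard {X} (P : (X -> Prop) -> Prop) (n : nat) : Prop :=
  exists l, NoDup l /\ length l = n /\ forall S, P S <-> In S l.

Definition dec (P : Prop) : bool := if excluded_middle_informative P then true else false.
Lemma dec_true (P : Prop) : dec P = true <-> P.
Proof. unfold dec; destruct (excluded_middle_informative P); split; intros; auto; discriminate || contradiction. Qed.

Lemma eq_dec_cl {A} (x y : A) : {x = y} + {x <> y}.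
Proof. apply excluded_middle_informative. Qed.

Lemma ffam_fcard {X} (P : (X -> Prop) -> Prop) : finite_family P -> exists n, fcard P n.
Proof.
  intros [l Hl]. exists (length (nodup eq_dec_cl (filter (fun S => dec (P S)) l))).
  eexists; split; [apply NoDup_nodup| split; [reflexivity|]].
  intros S. rewrite nodup_In, filter_In, dec_true. split; [|tauto].
  intros HS; split; auto. destruct (Hl S HS) as [T [HT HST]]. apply seteq_eq in HST; subst; auto.
Qed.

Lemma fcard_ffam {X} (P : (X -> Prop) -> Prop) n : fcard P n -> finite_family P.
Proof. intros [l [_ [_ H]]]. exists l; intros S HS; exists S; split; [apply H; auto| intros a; tauto]. Qed.

Lemma fcard_unique {X} (P : (X -> Prop) -> Prop) n m : fcard P n -> fcard P m -> n = m.
Proof.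
  intros [l [Hl [Hn HS]]] [l' [Hl' [Hm HS']]].
  assert (length l <= length l') by (apply NoDup_incl_length; auto; intros x Hx; apply HS', HS; auto).
  assert (length l' <= length l) by (apply NoDup_incl_length; auto; intros x Hx; apply HS, HS'; auto).
  lia.
Qed.

Definition card {X} (P : (X -> Prop) -> Prop) : option nat :=
  match excluded_middle_informative (finite_family P) with
  | left H => Some (proj1_sig (constructive_indefinite_description _ (ffam_fcard P H)))
  | right _ => None
  end.

Lemma card_Some {X} (P : (X -> Prop) -> Prop) n : card P = Some n <-> fcard P n.
Proof.
  unfold card; destruct (excluded_middle_informative (finite_family P)) as [H|H].
  - destruct (constructive_indefinite_description _ _) as [m Hm]; simpl. split.
    + intros E; inversion E; subst; auto.
    + intros Hn; f_equal; eapply fcard_unique; eauto.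
  - split; [discriminate|]. intros Hn; exfalso; apply H; eapply fcard_ffam; eauto.
Qed.

Lemma card_None {X} (P : (X -> Prop) -> Prop) : card P = None <-> ~ finite_family P.
Proof.
  unfold card; destruct (excluded_middle_informative (finite_family P)) as [H|H];
    split; intros; auto; try discriminate; contradiction.
Qed.

Lemma card_ext {X} (P Q : (X -> Prop) -> Prop) : (forall S, P S <-> Q S) -> card P = card Q.
Proof.
  intros H. assert (P = Q) by (apply functional_extensionality; intros; apply propositional_extensionality; auto).
  subst; auto.
Qed.

Definition pick {A} (P : A -> Prop) (d : A) : A :=
  match excluded_middle_informative (exists x, P x) with
  | left H => proj1_sig (constructive_indefinite_description _ H) | right _ => d end.

Lemma pick_spec {A} (P : A -> Prop) d : (exists x, P x) -> P (pick P d).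
Proof.
  intros H; unfold pick; destruct (excluded_middle_informative _) as [H'|H']; [|contradiction].
  exact (proj2_sig (constructive_indefinite_description _ H')).
Qed.

Lemma equipotent_sym {X} (P Q : (X -> Prop) -> Prop) : equipotent P Q -> equipotent Q P.
Proof.
  intros [F [H1 [H2 H3]]].
  assert (Hg : forall T, Q T -> exists S, P S /\ F S = T).
  { intros T HT. destruct (H3 T HT) as [S [HS HST]]. exists S; split; auto; apply seteq_eq; auto. }
  exists (fun T => pick (fun S => P S /\ F S = T) T).
  refine (conj _ (conj _ _)).
  - intros T HT. apply (pick_spec _ T (Hg T HT)).
  - intros T T' HT HT' E. apply seteq_eq in E.
    destruct (pick_spec _ T (Hg T HT)) as [_ E1]. destruct (pick_spec _ T' (Hg T' HT')) as [_ E2].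
    rewrite <- E1, <- E2, E; intros ?; tauto.
  - intros S HS. exists (F S); split; auto.
    destruct (pick_spec _ (F S) (Hg (F S) (H1 S HS))) as [HS' E].
    assert (E' : pick (fun S0 => P S0 /\ F S0 = F S) (F S) = S) by (apply seteq_eq, H2; auto; rewrite E; intros ?; tauto).
    rewrite E'; intros ?; tauto.
Qed.

Lemma equipotent_trans {X} (P Q R : (X -> Prop) -> Prop) :
  equipotent P Q -> equipotent Q R -> equipotent P R.
Proof.
  intros [F [H1 [H2 H3]]] [G [G1 [G2 G3]]]. exists (fun S => G (F S)). refine (conj _ (conj _ _)).
  - intros S HS; auto.
  - intros S S' HS HS' E. apply H2; auto; apply G2; auto.
  - intros T HT. destruct (G3 T HT) as [U [HU E]]. destruct (H3 U HU) as [S [HS E']].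
    apply seteq_eq in E'; subst. eauto.
Qed.

Lemma equipotent_refl {X} (P : (X -> Prop) -> Prop) : equipotent P P.
Proof. exists (fun S => S); refine (conj _ (conj _ _)); [intros S HS; exact HS| intros S S0 _ _ E; exact E|]. intros T HT; exists T; split; auto; intros ?; tauto. Qed.

Lemma equipotent_finite {X} (P Q : (X -> Prop) -> Prop) : equipotent P Q -> finite_family P -> finite_family Q.
Proof.
  intros [F [H1 [H2 H3]]] [l Hl]. exists (map F l). intros T HT.
  destruct (H3 T HT) as [S [HS E]]. destruct (Hl S HS) as [S' [HS' E']].
  apply seteq_eq in E; apply seteq_eq in E'; subst. exists (F S'); split; [apply in_map; auto| intros ?; tauto].
Qed.

Lemma equipotent_le {X} (P Q : (X -> Prop) -> Prop) n m : equipotent P Q -> fcard P n -> fcard Q m -> n <= m.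
Proof.
  intros [F [H1 [H2 H3]]] [l [Hl [Hn HP]]] [l' [Hl' [Hm HQ]]]. subst.
  rewrite <- (length_map F l). apply NoDup_incl_length.
  - apply NoDup_map_inj; auto. intros x y Hx Hy E. apply seteq_eq, H2; try apply HP; auto.
    rewrite E; intros ?; tauto.
  - intros T HT. apply in_map_iff in HT as [S [<- HS]]. apply HQ, H1, HP; auto.
Qed.

Lemma equipotent_card {X} (P Q : (X -> Prop) -> Prop) : equipotent P Q -> card P = card Q.
Proof.
  intros H. pose proof (equipotent_sym _ _ H) as H'.
  destruct (card P) as [n|] eqn:EP; destruct (card Q) as [m|] eqn:EQ; auto.
  - apply card_Some in EP; apply card_Some in EQ. f_equal; apply Nat.le_antisymm; [exact (equipotent_le _ _ _ _ H EP EQ)|exact (equipotent_le _ _ _ _ H' EQ EP)].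
  - apply card_Some in EP; apply card_None in EQ. exfalso; apply EQ; eapply equipotent_finite; eauto; eapply fcard_ffam; eauto.
  - apply card_Some in EQ; apply card_None in EP. exfalso; apply EP; eapply equipotent_finite; eauto; eapply fcard_ffam; eauto.
Qed.

Lemma list_bij {X} (l l' : list (X -> Prop)) : NoDup l -> NoDup l' -> length l = length l' ->
  exists F : (X -> Prop) -> (X -> Prop), (forall S, In S l -> In (F S) l') /\
    (forall S S', In S l -> In S' l -> F S = F S' -> S = S') /\ (forall T, In T l' -> exists S, In S l /\ F S = T).
Proof.
  revert l'; induction l as [|x l IH]; intros [|y l'] Hl Hl' E; simpl in E; try discriminate.
  - exists (fun S => S); simpl; repeat split; intros; contradiction.
  - inversion Hl; inversion Hl'; subst. destruct (IH l' H2 H6 ltac:(lia)) as [F [F1 [F2 F3]]].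
    exists (fun S => if eq_dec_cl S x then y else F S). repeat split.
    + intros Z [<-|HZ].
      * destruct (eq_dec_cl x x); [simpl; auto|contradiction].
      * destruct (eq_dec_cl Z x); subst; simpl; auto.
    + intros S S' HS HS'.
      destruct (eq_dec_cl S x) as [e|n]; destruct (eq_dec_cl S' x) as [e'|n']; subst; auto.
      * destruct HS' as [?|HS']; [subst; contradiction|]. intros E'; exfalso; apply H5; rewrite E'; auto.
      * destruct HS as [?|HS]; [subst; contradiction|]. intros E'; exfalso; apply H5; rewrite <- E'; auto.
      * destruct HS as [?|HS]; [subst; contradiction|]. destruct HS' as [?|HS']; [subst; contradiction|]. auto.
    + intros T [<-|HT].
      * exists x; split; simpl; auto. destruct (eq_dec_cl x x); congruence.
      * destruct (F3 T HT) as [S [HS <-]]. exists S; split; simpl; auto.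
        destruct (eq_dec_cl S x); subst; try contradiction; auto.
Qed.

Definition countable_fam {X} (P : (X -> Prop) -> Prop) : Prop :=
  exists iota : (X -> Prop) -> nat, forall S S', P S -> P S' -> iota S = iota S' -> S = S'.

Definition bij_nat {X} (P : (X -> Prop) -> Prop) : Prop :=
  exists (phi : (X -> Prop) -> nat) (psi : nat -> (X -> Prop)),
    (forall S, P S -> psi (phi S) = S) /\ (forall k, P (psi k) /\ phi (psi k) = k).

Lemma bij_nat_equipotent {X} (P Q : (X -> Prop) -> Prop) : bij_nat P -> bij_nat Q -> equipotent P Q.
Proof.
  intros [phi [psi [H1 H2]]] [phi' [psi' [H1' H2']]].
  exists (fun S => psi' (phi S)). refine (conj _ (conj _ _)).
  - intros; apply H2'.
  - intros S S' HS HS' E. apply seteq_eq in E.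
    assert (phi S = phi S') by (rewrite <- (proj2 (H2' (phi S))), <- (proj2 (H2' (phi S'))), E; auto).
    rewrite <- (H1 S HS), <- (H1 S' HS'), H; intros ?; tauto.
  - intros T HT. exists (psi (phi' T)). rewrite (proj2 (H2 _)), H1'; auto. split; [apply H2|intros ?; tauto].
Qed.

Lemma unbounded_min (A : nat -> Prop) : (forall k, exists x, A x /\ k <= x) ->
  forall k, { x | (A x /\ k <= x) /\ forall y, A y -> k <= y -> x <= y }.
Proof.
  intros H k. apply constructive_indefinite_description.
  destruct (nat_min (fun x => A x /\ k <= x) (H k)) as [x [Hx Hm]].
  exists x; split; auto. intros y Ay Hy. destruct (le_lt_dec x y); auto. exfalso; apply (Hm y); auto.
Qed.

Lemma enum_nat (A : nat -> Prop) : (forall k, exists x, A x /\ k <= x) ->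
  exists en : nat -> nat, (forall i, A (en i)) /\ (forall i j, en i = en j -> i = j) /\
    (forall x, A x -> exists i, en i = x).
Proof.
  intros H. pose (nx := fun k => proj1_sig (unbounded_min A H k)).
  assert (Hnx : forall k, (A (nx k) /\ k <= nx k) /\ forall y, A y -> k <= y -> nx k <= y)
    by (intros k; exact (proj2_sig (unbounded_min A H k))).
  pose (en := fix en i := match i with 0 => nx 0 | S i => nx (S (en i)) end).
  assert (HA : forall i, A (en i)) by (intros [|i]; simpl; apply Hnx).
  assert (Hinc : forall i, en i < en (S i)) by (intros i; simpl; pose proof (Hnx (S (en i))); lia).
  assert (Hmono : forall i j, i < j -> en i < en j).
  { intros i j Hij; induction Hij; auto. specialize (Hinc m); lia. }
  exists en; repeat split; auto.
  - intros i j E. destruct (lt_eq_lt_dec i j) as [[Hl|He]|Hl]; auto;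
      [specialize (Hmono _ _ Hl)|specialize (Hmono _ _ Hl)]; lia.
  - intros x Ax.
    assert (Hgen : forall i, forall y, A y -> y < en i -> exists j, en j = y).
    { induction i; intros y Ay Hy.
      - simpl in Hy. pose proof (proj2 (Hnx 0) y Ay ltac:(lia)); lia.
      - destruct (lt_eq_lt_dec y (en i)) as [[Hl|He]|Hl].
        + apply IHi; auto.
        + exists i; auto.
        + simpl in Hy. pose proof (proj2 (Hnx (S (en i))) y Ay ltac:(lia)); lia. }
    assert (Hge : forall i, i <= en i) by (induction i; [lia| specialize (Hinc i); lia]).
    apply (Hgen (S x) x Ax). specialize (Hge (S x)); lia.
Qed.

Lemma countable_infinite_bij {X} (P : (X -> Prop) -> Prop) :
  countable_fam P -> ~ finite_family P -> bij_nat P.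
Proof.
  intros [iota Hi] Hinf.
  set (A := fun k => exists S, P S /\ iota S = k).
  assert (HA : forall k, exists x, A x /\ k <= x).
  { intros k. apply NNPP; intros Hno. apply Hinf.
    exists (map (fun j => match excluded_middle_informative (exists S, P S /\ iota S = j) with
                         | left H => proj1_sig (constructive_indefinite_description _ H)
                         | right _ => fun _ => False end) (seq 0 k)).
    intros S HS. exists S; split; [|intros ?; tauto].
    assert (Hlt : iota S < k).
    { destruct (lt_dec (iota S) k); auto. exfalso; apply Hno; exists (iota S); split; [exists S; auto|lia]. }
    apply in_map_iff. exists (iota S); split; [|apply in_seq; lia].
    destruct (excluded_middle_informative _) as [H|H]; [|exfalso; eauto].
    destruct (constructive_indefinite_description _ _) as [S' [HS' E]]; simpl. apply Hi; auto. }
  destruct (enum_nat A HA) as [en [Hen1 [Hen2 Hen3]]].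
  assert (Hpsi : forall k, { S | P S /\ iota S = en k }) by (intros k; apply constructive_indefinite_description, Hen1).
  assert (Hphi : forall S, P S -> { i | en i = iota S }).
  { intros S HS; apply constructive_indefinite_description, Hen3. exists S; auto. }
  exists (fun S => match excluded_middle_informative (P S) with left H => proj1_sig (Hphi S H) | right _ => 0 end).
  exists (fun k => proj1_sig (Hpsi k)). split.
  - intros S HS. destruct (excluded_middle_informative (P S)) as [H|H]; [|contradiction].
    destruct (Hphi S H) as [i Ei]; simpl. destruct (Hpsi i) as [S' [HS' E']]; simpl.
    apply Hi; auto; congruence.
  - intros k. destruct (Hpsi k) as [S [HS E]]; simpl. split; auto.
    destruct (excluded_middle_informative (P S)) as [H|H]; [|contradiction].
    destruct (Hphi S H) as [i Ei]; simpl. apply Hen2; congruence.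
Qed.

Lemma card_equipotent {X} (P Q : (X -> Prop) -> Prop) : countable_fam P -> countable_fam Q ->
  card P = card Q -> equipotent P Q.
Proof.
  intros CP CQ E. destruct (card P) as [n|] eqn:EP.
  - symmetry in E. apply card_Some in EP, E. destruct EP as [l [Hl [Hn HP]]]. destruct E as [l' [Hl' [Hm HQ]]].
    destruct (list_bij l l' Hl Hl' ltac:(lia)) as [F [F1 [F2 F3]]].
    exists F; refine (conj _ (conj _ _)).
    + intros S HS; apply HQ, F1, HP; auto.
    + intros S S' HS HS' E'. apply seteq_eq in E'. rewrite (F2 S S'); try apply HP; auto; intros ?; tauto.
    + intros T HT. destruct (F3 T (proj1 (HQ T) HT)) as [S [HS <-]]. exists S; split; [apply HP; auto|intros ?; tauto].
  - symmetry in E. apply card_None in EP, E. apply bij_nat_equipotent; apply countable_infinite_bij; auto.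
Qed.

Lemma fcard_split {X} (P D : (X -> Prop) -> Prop) a b :
  fcard (fun S => P S /\ D S) a -> fcard (fun S => P S /\ ~ D S) b -> fcard P (a + b).
Proof.
  intros [l [Hl [Ha H1]]] [l' [Hl' [Hb H2]]]. exists (l ++ l'). repeat split.
  - apply NoDup_app; auto. intros x Hx Hx'. apply H1 in Hx; apply H2 in Hx'. tauto.
  - rewrite length_app; lia.
  - intros HS. apply in_or_app. destruct (classic (D S)); [left; apply H1| right; apply H2]; auto.
  - intros HS. apply in_app_or in HS as [HS|HS]; [apply H1 in HS|apply H2 in HS]; tauto.
Qed.

Lemma ffam_sub {X} (P Q : (X -> Prop) -> Prop) : (forall S, Q S -> P S) -> finite_family P -> finite_family Q.
Proof. intros H [l Hl]. exists l; auto. Qed.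

Lemma ffam_union {X} (P D : (X -> Prop) -> Prop) :
  finite_family (fun S => P S /\ D S) -> finite_family (fun S => P S /\ ~ D S) -> finite_family P.
Proof.
  intros [l H1] [l' H2]. exists (l ++ l'). intros S HS. destruct (classic (D S)).
  - destruct (H1 S (conj HS H)) as [T [HT E]]; exists T; split; auto; apply in_or_app; auto.
  - destruct (H2 S (conj HS H)) as [T [HT E]]; exists T; split; auto; apply in_or_app; auto.
Qed.

Lemma card_split_Some {X} (P D : (X -> Prop) -> Prop) a b :
  card (fun S => P S /\ D S) = Some a -> card (fun S => P S /\ ~ D S) = Some b -> card P = Some (a + b).
Proof. intros H1 H2; apply card_Some in H1, H2; apply card_Some; eapply fcard_split; eauto. Qed.

Lemma card_split_None {X} (P D : (X -> Prop) -> Prop) :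
  card (fun S => P S /\ ~ D S) = None -> card P = None.
Proof.
  intros H; apply card_None in H; apply card_None; intros Hf; apply H. eapply ffam_sub; [|exact Hf]. tauto.
Qed.

Lemma card_agree {X} (P Q D : (X -> Prop) -> Prop) :
  (forall S, ~ D S -> (P S <-> Q S)) ->
  card (fun S => P S /\ D S) = card (fun S => Q S /\ D S) ->
  card (fun S => P S /\ D S) <> None ->
  card P = card Q.
Proof.
  intros Hag HD Hfin.
  assert (E : card (fun S => P S /\ ~ D S) = card (fun S => Q S /\ ~ D S)).
  { apply card_ext; intros S; split; intros [H1 H2]; split; auto; apply Hag; auto. }
  destruct (card (fun S => P S /\ D S)) as [a|] eqn:Ea; [|contradiction].
  destruct (card (fun S => P S /\ ~ D S)) as [b|] eqn:Eb.
  - rewrite (card_split_Some P D a b); auto. symmetry; apply (card_split_Some Q D); auto.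
  - rewrite (card_split_None P D Eb). symmetry; apply (card_split_None Q D); congruence.
Qed.

Lemma card_add1 {X} (P Q : (X -> Prop) -> Prop) B :
  (forall S, Q S <-> P S \/ S = B) -> ~ P B -> card Q = option_map S (card P).
Proof.
  intros HQ HB. destruct (card P) as [n|] eqn:E; simpl.
  - apply card_Some in E as [l [Hl [Hn HP]]]. apply card_Some. exists (B :: l). repeat split.
    + constructor; auto. intros Hin; apply HB, HP; auto.
    + simpl; lia.
    + intros HS. apply HQ in HS as [HS|HS]; [right; apply HP; auto|left; auto].
    + intros [HS|HS]; apply HQ; [right; auto|left; apply HP; auto].
  - apply card_None in E; apply card_None. intros Hf; apply E. eapply ffam_sub; [|exact Hf]. intros S HS; apply HQ; auto.
Qed.

Definition nonimg {X} (f : X -> X) (a : X) : Prop := forall b, f b <> a.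

Lemma nonimg_noper {X} (f : X -> X) s : nonimg f s -> noper f s.
Proof. intros H [|p] Hp E; [lia|]. simpl in E. apply (H _ E). Qed.

Lemma nonimg_unique {X} (f : X -> X) s s' : injective f -> nonimg f s -> nonimg f s' -> conn f s s' -> s = s'.
Proof.
  intros Hf Hs Hs' [m [n E]]. destruct (lt_eq_lt_dec m n) as [[Hl|He]|Hl].
  - replace n with ((n - m) + m) in E by lia. rewrite it_add, it_comm in E.
    apply (it_inj f m Hf) in E. destruct (n - m) eqn:Enm; [lia|]. simpl in E. exfalso; apply (Hs _ (eq_sym E)).
  - subst. exact (it_inj f n Hf _ _ E).
  - replace m with ((m - n) + n) in E by lia. rewrite it_add, it_comm in E.
    apply (it_inj f n Hf) in E. destruct (m - n) eqn:Enm; [lia|]. simpl in E. exfalso; apply (Hs' _ E).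
Qed.

Lemma infinite_cycle_iff {X} (f : X -> X) S : injective f ->
  infinite_cycle f S <-> exists a, S = cyc f a /\ noper f a.
Proof.
  intros Hf; split.
  - intros [HS Hinf]. apply cycle_iff in HS as [a [Sa ->]]. exists a; split; auto. apply infinite_noper; auto.
  - intros [a [-> Ha]]. split; [apply cyc_is_cycle|apply noper_infinite; auto].
Qed.

Lemma forward_cycle_iff {X} (f : X -> X) S : injective f ->
  forward_cycle f S <-> exists s, S = cyc f s /\ nonimg f s.
Proof.
  intros Hf; split.
  - intros [HS [s [Ss Hs]]]. exists s; split; [|exact Hs]. apply is_cycle_cyc; auto. apply HS.
  - intros [s [-> Hs]]. split; [apply infinite_cycle_iff; auto; exists s; split; auto; apply nonimg_noper; auto|].
    exists s; split; auto; apply conn_refl.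
Qed.

Definition meets {X} (K : X -> Prop) (S : X -> Prop) : Prop := exists a, S a /\ K a.

Lemma cycles_countable {X} (f : X -> X) (P : (X -> Prop) -> Prop) : countably_infinite X ->
  (forall S, P S -> is_cycle f S) -> countable_fam P.
Proof.
  intros [e [He Hs]] HP. destruct (Hs 0) as [d _].
  exists (fun S => e (pick S d)). intros S S' HS HS' E. apply He in E.
  pose proof (HP S HS) as C; pose proof (HP S' HS') as C'.
  apply (cycles_disjoint f S S' (pick S d)); auto.
  - apply pick_spec, C.
  - rewrite E; apply pick_spec, C'.
Qed.

Definition perturb {X} (g p k kinv : X -> X) : Prop :=
  injective g /\ (forall a, kinv (k a) = a) /\ (forall a, k (kinv a) = a) /\ (forall a, p a = k (g a)).

Lemma perturb_sym {X} (g p k kinv : X -> X) : perturb g p k kinv -> perturb p g kinv k.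
Proof.
  intros [Hg [H1 [H2 H3]]]. repeat split; auto.
  - intros a b E. rewrite !H3 in E. apply Hg. rewrite <- (H1 (g a)), <- (H1 (g b)), E; auto.
  - intros a; rewrite H3, H1; auto.
Qed.

Lemma perturb_inj {X} (g p k kinv : X -> X) : perturb g p k kinv -> injective p.
Proof. intros H; apply perturb_sym in H; apply H. Qed.

Lemma moved_inv {X} (k kinv : X -> X) a : (forall a, kinv (k a) = a) -> (forall a, k (kinv a) = a) ->
  (kinv a <> a <-> k a <> a).
Proof.
  intros H1 H2; split; intros H E; apply H.
  - rewrite <- E at 1; auto.
  - rewrite <- E at 1; auto.
Qed.

Lemma moved_k {X} (k kinv : X -> X) a : (forall a, kinv (k a) = a) -> k a <> a -> k (k a) <> k a.
Proof. intros H1 H E. apply H. rewrite <- (H1 (k a)), E, H1. reflexivity. Qed.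

Lemma common_cycle {X} (g p k kinv : X -> X) S : perturb g p k kinv ->
  is_cycle g S -> (forall a, S a -> k a = a) -> is_cycle p S.
Proof.
  intros [Hg [H1 [H2 H3]]] HS Hfix.
  destruct HS as [Hne [Hinv Hmin]].
  assert (Hpg : forall b, S b -> p b = g b).
  { intros b Sb. rewrite H3. apply Hfix. apply Hinv; auto. }
  split; [auto| split].
  - intros b. split; intros Hb.
    + rewrite H3 in Hb. destruct (classic (k (g b) = g b)) as [E|E].
      * rewrite E in Hb. apply Hinv; auto.
      * exfalso. apply (moved_k k kinv (g b) H1 E). apply Hfix; auto.
    + rewrite Hpg; auto. apply Hinv; auto.
  - intros T HT Hsub HTinv. apply Hmin; auto. intros b.
    destruct (classic (S b)) as [Sb|Sb].
    + rewrite <- Hpg; auto.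
    + split; intros H; exfalso.
      * apply Sb, Hinv, Hsub; auto.
      * apply Sb, Hsub; auto.
Qed.

Lemma common_nonimg {X} (g p k kinv : X -> X) a : perturb g p k kinv -> k a = a ->
  (nonimg g a <-> nonimg p a).
Proof.
  intros [Hg [H1 [H2 H3]]] Ha. split; intros H b E.
  - rewrite H3 in E. apply (H b). rewrite <- (H1 (g b)), E, <- Ha, H1; auto.
  - apply (H b). rewrite H3, E; auto.
Qed.

Lemma common_props {X} (g p k kinv : X -> X) S : perturb g p k kinv -> ~ meets (fun a => k a <> a) S ->
  (is_cycle g S <-> is_cycle p S) /\ (forall a, S a -> (nonimg g a <-> nonimg p a)).
Proof.
  intros Hpt HS.
  assert (Hfix : forall a, S a -> k a = a) by (intros a Sa; apply NNPP; intros E; apply HS; exists a; auto).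
  split.
  - split; intros H; [eapply common_cycle; eauto|].
    apply (common_cycle p g kinv k); auto using perturb_sym.
    intros a Sa. rewrite <- (Hfix a Sa) at 1. destruct Hpt as [_ [H1 _]]; auto.
  - intros a Sa. apply (common_nonimg g p k kinv); auto.
Qed.

Lemma common_open {X} (g p k kinv : X -> X) S : perturb g p k kinv -> ~ meets (fun a => k a <> a) S ->
  (open_cycle g S <-> open_cycle p S).
Proof.
  intros Hpt HS. destruct (common_props g p k kinv S Hpt HS) as [Hc Hn].
  unfold open_cycle, infinite_cycle. rewrite Hc. split; intros [[C F] N]; (split; [split; auto|]);
    intros [a [Sa Ha]]; apply N; exists a; split; auto;
    first [exact (proj1 (Hn a Sa) Ha) | exact (proj2 (Hn a Sa) Ha)].
Qed.

Lemma common_fwd {X} (g p k kinv : X -> X) S : perturb g p k kinv -> ~ meets (fun a => k a <> a) S ->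
  (forward_cycle g S <-> forward_cycle p S).
Proof.
  intros Hpt HS. destruct (common_props g p k kinv S Hpt HS) as [Hc Hn].
  unfold forward_cycle, infinite_cycle. rewrite Hc. split; intros [[C F] [a [Sa Ha]]]; (split; [split; auto|]);
    exists a; split; auto;
    first [exact (proj1 (Hn a Sa) Ha) | exact (proj2 (Hn a Sa) Ha)].
Qed.

Lemma common_size {X} (g p k kinv : X -> X) n S : perturb g p k kinv -> ~ meets (fun a => k a <> a) S ->
  (cycle_of_size g n S <-> cycle_of_size p n S).
Proof.
  intros Hpt HS. destruct (common_props g p k kinv S Hpt HS) as [Hc Hn].
  unfold cycle_of_size. rewrite Hc. tauto.
Qed.

Lemma meeting_finite {X} (f : X -> X) (K : X -> Prop) (L : list X) : (forall a, K a -> In a L) ->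
  finite_family (fun S => is_cycle f S /\ meets K S).
Proof.
  intros HL. exists (map (cyc f) L). intros S [HS [a [Sa Ka]]].
  exists (cyc f a); split; [apply in_map; auto|]. rewrite <- (is_cycle_cyc f S a); auto. intros ?; tauto.
Qed.

Definition esc {X} (f : X -> X) (K : X -> Prop) (y : X) : Prop := forall i, ~ K (it f i y).

Lemma esc_exists {X} (f : X -> X) (K : X -> Prop) (L : list X) x : injective f -> noper f x ->
  (forall a, K a -> In a L) -> exists M, esc f K (it f M x).
Proof.
  intros Hf Hx HL.
  assert (H : exists M, forall i, M <= i -> ~ In (it f i x) L).
  { clear HL. induction L as [|z L [M HM]].
    - exists 0; intros i _ H; inversion H.
    - destruct (classic (exists j, it f j x = z)) as [[j Hj]|Hno].
      + exists (max M (S j)). intros i Hi [E|E].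
        * assert (i = j) by (apply (noper_inj f x); auto; congruence). lia.
        * apply (HM i); auto; lia.
      + exists M. intros i Hi [E|E]; [apply Hno; eauto| apply (HM i); auto]. }
  destruct H as [M HM]. exists M. intros i Ki. apply (HM (i + M)); [lia|]. rewrite it_add; auto.
Qed.


Lemma esc_same {X} (g p k kinv : X -> X) (K : X -> Prop) y : perturb g p k kinv ->
  (forall a, K a <-> k a <> a) -> esc g K y -> forall i, it p i y = it g i y.
Proof.
  intros [Hg [H1 [H2 H3]]] HK Hy i. induction i; simpl; auto.
  rewrite IHi, H3. apply NNPP; intros E. apply (Hy (S i)). apply HK; auto.
Qed.

Lemma esc_to {X} (g p k kinv : X -> X) (K : X -> Prop) y : perturb g p k kinv ->
  (forall a, K a <-> k a <> a) -> esc g K y -> esc p K y.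
Proof. intros Hpt HK Hy i. rewrite (esc_same g p k kinv K y Hpt HK Hy); auto. Qed.

Lemma esc_conn {X} (g p k kinv : X -> X) (K : X -> Prop) y y' : perturb g p k kinv ->
  (forall a, K a <-> k a <> a) -> esc g K y -> esc g K y' -> conn g y y' -> conn p y y'.
Proof.
  intros Hpt HK Hy Hy' [m [n E]]. exists m, n.
  rewrite !(esc_same g p k kinv K _ Hpt HK); auto.
Qed.

Lemma HK_sym {X} (k kinv : X -> X) (K : X -> Prop) : (forall a, kinv (k a) = a) -> (forall a, k (kinv a) = a) ->
  (forall a, K a <-> k a <> a) -> (forall a, K a <-> kinv a <> a).
Proof. intros H1 H2 HK a. rewrite HK, moved_inv; auto; tauto. Qed.

Lemma meets_K {X} (k : X -> X) (K : X -> Prop) S : (forall a, K a <-> k a <> a) ->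
  (meets K S <-> meets (fun a => k a <> a) S).
Proof. intros HK; split; intros [a [Sa Ka]]; exists a; split; auto; apply HK; auto. Qed.

Lemma nomeet_eq {X} (g p k kinv : X -> X) (K : X -> Prop) D C y : perturb g p k kinv ->
  (forall a, K a <-> k a <> a) -> is_cycle p D -> ~ meets K D -> is_cycle g C -> D y -> C y -> D = C.
Proof.
  intros Hpt HK HD HnD HC Dy Cy.
  assert (HDg : is_cycle g D).
  { apply (common_props g p k kinv D Hpt); auto. rewrite <- meets_K; eauto. }
  apply (cycles_disjoint g D C y); auto.
Qed.

Lemma inf_to {X} (g p k kinv : X -> X) (K : X -> Prop) (L : list X) C : perturb g p k kinv ->
  (forall a, K a <-> k a <> a) -> (forall a, K a -> In a L) ->
  infinite_cycle g C -> meets K C ->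
  exists y, C y /\ esc g K y /\ (forall y', C y' -> esc g K y' ->
     infinite_cycle p (cyc p y') /\ meets K (cyc p y') /\ C = cyc g y').
Proof.
  intros Hpt HK HL HC HmC. pose proof Hpt as [Hg _].
  apply (infinite_cycle_iff g C Hg) in HC as [x [-> Hx]].
  destruct (esc_exists g K L x Hg Hx HL) as [M HM]. exists (it g M x). split; [apply conn_it|split; auto].
  intros y' Cy' Hy'.
  assert (Hnp : noper g y') by (eapply noper_conn; eauto).
  assert (HCy : cyc g x = cyc g y') by (apply cyc_eq; auto).
  split; [|split; auto].
  - apply (infinite_cycle_iff p _ (perturb_inj _ _ _ _ Hpt)). exists y'; split; auto.
    intros q Hq E. apply (Hnp q Hq). rewrite <- (esc_same g p k kinv K y' Hpt HK Hy'); auto.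
  - apply NNPP; intros Hn.
    assert (E : cyc p y' = cyc g x).
    { apply (nomeet_eq g p k kinv K (cyc p y') (cyc g x) y' Hpt HK (cyc_is_cycle p y') Hn (cyc_is_cycle g x) (conn_refl p y')). auto. }
    apply Hn. rewrite E; auto.
Qed.

Lemma inf_equipotent {X} (g p k kinv : X -> X) (K : X -> Prop) (L : list X) (d : X) : perturb g p k kinv ->
  (forall a, K a <-> k a <> a) -> (forall a, K a -> In a L) ->
  equipotent (fun S => infinite_cycle g S /\ meets K S) (fun S => infinite_cycle p S /\ meets K S).
Proof.
  intros Hpt HK HL.
  pose proof (perturb_sym _ _ _ _ Hpt) as Hpt'. pose proof (HK_sym k kinv K (proj1 (proj2 Hpt)) (proj1 (proj2 (proj2 Hpt))) HK) as HK'.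
  pose proof Hpt as [Hg _]. pose proof (perturb_inj _ _ _ _ Hpt) as Hp.
  exists (fun C => cyc p (pick (fun y => C y /\ esc g K y) d)).
  refine (conj _ (conj _ _)).
  - intros C [HC Hm]. destruct (inf_to g p k kinv K L C Hpt HK HL HC Hm) as [y [Cy [Ey Hall]]].
    destruct (pick_spec (fun y => C y /\ esc g K y) d (ex_intro _ y (conj Cy Ey))) as [Cy' Ey'].
    destruct (Hall _ Cy' Ey') as [A1 [A2 _]]; auto.
  - intros C C' [HC Hm] [HC' Hm'] E. apply seteq_eq in E.
    destruct (inf_to g p k kinv K L C Hpt HK HL HC Hm) as [y [Cy [Ey Hall]]].
    destruct (pick_spec (fun y => C y /\ esc g K y) d (ex_intro _ y (conj Cy Ey))) as [Cy1 Ey1].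
    destruct (inf_to g p k kinv K L C' Hpt HK HL HC' Hm') as [z [Cz [Ez Hall']]].
    destruct (pick_spec (fun y => C' y /\ esc g K y) d (ex_intro _ z (conj Cz Ez))) as [Cz1 Ez1].
    destruct (Hall _ Cy1 Ey1) as [_ [_ E1]]. destruct (Hall' _ Cz1 Ez1) as [_ [_ E2]].
    set (y1 := pick (fun y => C y /\ esc g K y) d) in *. set (z1 := pick (fun y => C' y /\ esc g K y) d) in *.
    assert (Hc : conn p y1 z1).
    { assert (cyc p z1 z1) by apply conn_refl. rewrite <- E in H. exact H. }
    assert (Hc' : conn g y1 z1).
    { apply (esc_conn p g kinv k K); auto; apply (esc_to g p k kinv K); auto. }
    rewrite E1, E2, (cyc_eq g y1 z1 Hc'); intros ?; tauto.
  - intros D [HD Hm].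
    destruct (inf_to p g kinv k K L D Hpt' HK' HL HD Hm) as [z [Dz [Ez Hall]]].
    destruct (Hall z Dz Ez) as [A1 [A2 A3]].
    exists (cyc g z). split; [split; auto|].
    destruct (inf_to g p k kinv K L (cyc g z) Hpt HK HL A1 A2) as [y [Cy [Ey Hall2]]].
    destruct (pick_spec (fun y => cyc g z y /\ esc g K y) d (ex_intro _ y (conj Cy Ey))) as [Cy1 Ey1].
    set (y1 := pick (fun y => cyc g z y /\ esc g K y) d) in *.
    assert (Hc : conn p z y1).
    { apply (esc_conn g p k kinv K); auto. apply (esc_to p g kinv k K); auto. }
    rewrite A3, <- (cyc_eq p z y1 Hc); intros ?; tauto.
Qed.

Lemma fwd_to {X} (g p k kinv : X -> X) (K : X -> Prop) s : perturb g p k kinv ->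
  (forall a, K a <-> k a <> a) -> nonimg g s -> meets K (cyc g s) ->
  nonimg p (k s) /\ meets K (cyc p (k s)).
Proof.
  intros Hpt HK Hs Hm. pose proof Hpt as [Hg [H1 [H2 H3]]].
  assert (Hn : nonimg p (k s)).
  { intros b E. rewrite H3 in E. apply (Hs b). rewrite <- (H1 (g b)), E, H1; auto. }
  split; auto.
  destruct (classic (k s = s)) as [E|E].
  - rewrite E in *. apply NNPP; intros Hno.
    assert (E' : cyc p s = cyc g s).
    { exact (nomeet_eq g p k kinv K (cyc p s) (cyc g s) s Hpt HK (cyc_is_cycle p s) Hno (cyc_is_cycle g s) (conn_refl p s) (conn_refl g s)). }
    apply Hno; rewrite E'; auto.
  - exists (k s); split; [apply conn_refl|]. apply HK. apply (moved_k k kinv); auto.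
Qed.

Lemma fwd_equipotent {X} (g p k kinv : X -> X) (K : X -> Prop) (d : X) : perturb g p k kinv ->
  (forall a, K a <-> k a <> a) ->
  equipotent (fun S => forward_cycle g S /\ meets K S) (fun S => forward_cycle p S /\ meets K S).
Proof.
  intros Hpt HK.
  pose proof (perturb_sym _ _ _ _ Hpt) as Hpt'. pose proof (HK_sym k kinv K (proj1 (proj2 Hpt)) (proj1 (proj2 (proj2 Hpt))) HK) as HK'.
  pose proof Hpt as [Hg [H1 [H2 H3]]]. pose proof (perturb_inj _ _ _ _ Hpt) as Hp.
  exists (fun C => cyc p (k (pick (fun s => C s /\ nonimg g s) d))).
  assert (Hpk : forall C, forward_cycle g C -> C (pick (fun s => C s /\ nonimg g s) d) /\
     nonimg g (pick (fun s => C s /\ nonimg g s) d) /\ C = cyc g (pick (fun s => C s /\ nonimg g s) d)).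
  { intros C HC. apply (forward_cycle_iff g C Hg) in HC as [s [-> Hs]].
    destruct (pick_spec (fun s0 => cyc g s s0 /\ nonimg g s0) d (ex_intro _ s (conj (conn_refl g s) Hs))) as [A B].
    split; auto; split; auto. apply cyc_eq; auto. }
  refine (conj _ (conj _ _)).
  - intros C [HC Hm]. destruct (Hpk C HC) as [A [B E]]. rewrite E in Hm.
    destruct (fwd_to g p k kinv K _ Hpt HK B Hm) as [B' Hm']. split; auto.
    apply forward_cycle_iff; eauto.
  - intros C C' [HC Hm] [HC' Hm'] E. apply seteq_eq in E.
    destruct (Hpk C HC) as [A [B E1]]. destruct (Hpk C' HC') as [A' [B' E2]].
    rewrite E1 in Hm; rewrite E2 in Hm'.
    destruct (fwd_to g p k kinv K _ Hpt HK B Hm) as [N1 _].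
    destruct (fwd_to g p k kinv K _ Hpt HK B' Hm') as [N2 _].
    assert (Hc : conn p (k (pick (fun s => C s /\ nonimg g s) d)) (k (pick (fun s => C' s /\ nonimg g s) d))).
    { unfold conn. change (cyc p (k (pick (fun s => C s /\ nonimg g s) d)) (k (pick (fun s => C' s /\ nonimg g s) d))).
      rewrite E. apply conn_refl. }
    pose proof (nonimg_unique p _ _ Hp N1 N2 Hc) as Ek.
    assert (Ep : pick (fun s => C s /\ nonimg g s) d = pick (fun s => C' s /\ nonimg g s) d).
    { rewrite <- (H1 (pick (fun s => C s /\ nonimg g s) d)), Ek, H1. reflexivity. }
    assert (C = C') by (rewrite E1, E2, Ep; reflexivity). subst; intros ?; tauto.
  - intros D [HD Hm]. apply (forward_cycle_iff p D Hp) in HD as [t [-> Ht]].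
    destruct (fwd_to p g kinv k K t Hpt' HK' Ht Hm) as [Hs Hm2].
    assert (HC : forward_cycle g (cyc g (kinv t))) by (apply forward_cycle_iff; eauto).
    exists (cyc g (kinv t)); split; [split; auto|].
    destruct (Hpk _ HC) as [A [B E]].
    assert (Es : pick (fun s => cyc g (kinv t) s /\ nonimg g s) d = kinv t).
    { apply (nonimg_unique g); auto. apply conn_sym; exact A. }
    rewrite Es, H2; intros ?; tauto.
Qed.

Definition capprox {X} (f g : X -> X) : Prop :=
  card (open_cycle f) = card (open_cycle g) /\
  card (forward_cycle f) = card (forward_cycle g) /\
  (exists N, forall n, N <= n -> card (cycle_of_size f n) = card (cycle_of_size g n)) /\
  (forall n, 1 <= n -> card (cycle_of_size f n) <> card (cycle_of_size g n) ->
     card (cycle_of_size f n) <> None /\ card (cycle_of_size g n) <> None).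

Lemma ffam_card {X} (P : (X -> Prop) -> Prop) : finite_family P -> exists n, card P = Some n.
Proof. intros H. destruct (ffam_fcard P H) as [n Hn]. exists n; apply card_Some; auto. Qed.

Lemma card_None_transfer {X} (P Q D : (X -> Prop) -> Prop) :
  (forall S, ~ D S -> (P S <-> Q S)) -> finite_family (fun S => P S /\ D S) ->
  card P = None -> card Q = None.
Proof.
  intros Hag HfD HP. apply card_None in HP; apply card_None; intros HQ. apply HP.
  apply (ffam_union P D); auto. apply (ffam_sub Q); auto. intros S [HS HD]; apply Hag; auto.
Qed.

Lemma size_bound {X} (f : X -> X) (K : X -> Prop) (L : list X) : injective f -> (forall a, K a -> In a L) ->
  exists N, forall n S, N <= n -> meets K S -> ~ cycle_of_size f n S.
Proof.
  intros Hf HL.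
  assert (H : exists N, forall a, In a L -> forall n, cycle_of_size f n (cyc f a) -> n < N).
  { clear HL. induction L as [|a L [N HN]].
    - exists 0; intros a [].
    - destruct (classic (exists n, cycle_of_size f n (cyc f a))) as [[m Hm]|Hno].
      + exists (max N (S m)). intros b [<-|Hb] n Hn.
        * assert (n = m) by (eapply has_card_unique; [apply Hn|apply Hm]). lia.
        * specialize (HN b Hb n Hn); lia.
      + exists N. intros b [<-|Hb] n Hn; [exfalso; eauto|]. apply (HN b Hb n Hn). }
  destruct H as [N HN]. exists N. intros n S Hn [a [Sa Ka]] HS.
  rewrite (is_cycle_cyc f S a) in HS; [|apply HS|auto].
  specialize (HN a (HL a Ka) n HS). lia.
Qed.

Lemma inf_split {X} (f : X -> X) (M : (X -> Prop) -> Prop) :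
  finite_family (fun S => is_cycle f S /\ M S) -> exists a b,
    card (fun S => forward_cycle f S /\ M S) = Some a /\
    card (fun S => open_cycle f S /\ M S) = Some b /\
    card (fun S => infinite_cycle f S /\ M S) = Some (a + b).
Proof.
  intros HF.
  destruct (ffam_card (fun S => forward_cycle f S /\ M S)) as [a Ha].
  { eapply ffam_sub; [|exact HF]. intros S [[[HS _] _] HM]; auto. }
  destruct (ffam_card (fun S => open_cycle f S /\ M S)) as [b Hb].
  { eapply ffam_sub; [|exact HF]. intros S [[[HS _] _] HM]; auto. }
  exists a, b; split; auto; split; auto.
  apply (card_split_Some _ (forward_cycle f)).
  - rewrite <- Ha; apply card_ext; intros S. unfold forward_cycle; tauto.
  - rewrite <- Hb; apply card_ext; intros S. unfold forward_cycle, open_cycle; tauto.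
Qed.

Lemma perturb_capprox {X} (g p k kinv : X -> X) (L : list X) (d : X) : perturb g p k kinv ->
  (forall a, k a <> a -> In a L) -> capprox g p.
Proof.
  intros Hpt HL. set (K := fun a => k a <> a).
  assert (HK : forall a, K a <-> k a <> a) by (intros; unfold K; tauto).
  pose proof Hpt as [Hg [H1 [H2 H3]]]. pose proof (perturb_inj _ _ _ _ Hpt) as Hp.
  assert (Fg : finite_family (fun S => is_cycle g S /\ meets K S)) by (apply (meeting_finite g K L); auto).
  assert (Fp : finite_family (fun S => is_cycle p S /\ meets K S)) by (apply (meeting_finite p K L); auto).
  assert (Fsub : forall (f : X -> X) (P : (X -> Prop) -> Prop), finite_family (fun S => is_cycle f S /\ meets K S) ->
            (forall S, P S -> is_cycle f S) -> exists n, card (fun S => P S /\ meets K S) = Some n).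
  { intros f P HF HP. apply ffam_card. eapply ffam_sub; [|exact HF]. intros S [HS Hm]; auto. }
  assert (Efwd : card (fun S => forward_cycle g S /\ meets K S) = card (fun S => forward_cycle p S /\ meets K S))
    by (apply equipotent_card, (fwd_equipotent g p k kinv K d); auto).
  assert (Einf : card (fun S => infinite_cycle g S /\ meets K S) = card (fun S => infinite_cycle p S /\ meets K S))
    by (apply equipotent_card, (inf_equipotent g p k kinv K L d); auto).
  destruct (inf_split g (meets K) Fg) as [a [b [Ha [Hb Hc]]]].
  destruct (inf_split p (meets K) Fp) as [a' [b' [Ha' [Hb' Hc']]]].
  assert (a = a') by congruence. assert (b = b') by (rewrite Hc, Hc' in Einf; injection Einf; lia). subst a' b'.
  destruct (size_bound g K L Hg HL) as [Ng HNg].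
  destruct (size_bound p K L Hp HL) as [Np HNp].
  assert (Hagn : forall n S, ~ meets K S -> (cycle_of_size g n S <-> cycle_of_size p n S))
    by (intros n S HS; apply (common_size g p k kinv); auto).
  split; [|split; [|split]].
  - apply (card_agree _ _ (meets K)).
    + intros S HS. apply (common_open g p k kinv); auto.
    + congruence.
    + congruence.
  - apply (card_agree _ _ (meets K)).
    + intros S HS. apply (common_fwd g p k kinv); auto.
    + congruence.
    + congruence.
  - exists (max Ng Np). intros n Hn. apply card_ext. intros S.
    destruct (classic (meets K S)) as [Hm|Hm].
    + split; intros HS; exfalso; [apply (HNg n S)|apply (HNp n S)]; auto; lia.
    + apply Hagn; auto.
  - intros n _ Hne. split; intros HN.
    + apply Hne. rewrite HN. symmetry. apply (card_None_transfer (cycle_of_size g n) _ (meets K)); auto.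
      * eapply ffam_sub; [|exact Fg]. intros S [HS Hm]; split; auto; apply HS.
    + apply Hne. rewrite HN. apply (card_None_transfer (cycle_of_size p n) _ (meets K)); auto.
      * intros S HS; symmetry; apply Hagn; auto.
      * eapply ffam_sub; [|exact Fp]. intros S [HS Hm]; split; auto; apply HS.
Qed.

Definition SE {X} (f : X -> X) (a : X) (q : X -> X) (a' : X) : Prop :=
  (forall m n, it f m a = it f n a <-> it q m a' = it q n a') /\
  (forall m n, (exists b, it f m a = it f n b) <-> (exists c, it q m a' = it q n c)).

Lemma SE_sym {X} (f q : X -> X) a a' : SE f a q a' -> SE q a' f a.
Proof. intros [H1 H2]; split; intros; [rewrite H1|rewrite H2]; tauto. Qed.

Definition R {X} (f : X -> X) (a : X) (q : X -> X) (a' : X) (b c : X) : Prop :=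
  exists m n, it f m a = it f n b /\ it q m a' = it q n c.

Lemma R_swap {X} (f q : X -> X) a a' b c : R f a q a' b c -> R q a' f a c b.
Proof. intros [m [n [H1 H2]]]; exists m, n; auto. Qed.

Lemma it_add' {X} (f : X -> X) m n a : it f (m + n) a = it f n (it f m a).
Proof. rewrite Nat.add_comm; apply it_add. Qed.

Lemma R_func {X} (f q : X -> X) a a' b c c' : injective f -> injective q -> SE f a q a' ->
  R f a q a' b c -> R f a q a' b c' -> c = c'.
Proof.
  intros Hf Hq [HD _] [m [n [E1 E2]]] [m' [n' [E1' E2']]].
  assert (Hd : it f (m + n') a = it f (n + m') a).
  { rewrite it_add', E1, it_comm, <- E1', <- it_add. reflexivity. }
  apply HD in Hd.
  apply (it_inj q (n + n') Hq).
  transitivity (it q n' (it q m a')).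
  { rewrite E2, <- it_add, Nat.add_comm. reflexivity. }
  rewrite <- it_add', Hd, it_add, E2', <- it_add. reflexivity.
Qed.

Lemma R_inj {X} (f q : X -> X) a a' b b' c : injective f -> injective q -> SE f a q a' ->
  R f a q a' b c -> R f a q a' b' c -> b = b'.
Proof.
  intros Hf Hq HS H1 H2. apply R_swap in H1, H2. eapply (R_func q f a' a); eauto. apply SE_sym; auto.
Qed.

Lemma R_total {X} (f q : X -> X) a a' b : SE f a q a' -> conn f a b -> exists c, R f a q a' b c.
Proof.
  intros [_ HE] [m [n E]]. destruct (proj1 (HE m n) (ex_intro _ b E)) as [c Ec].
  exists c, m, n; auto.
Qed.

Lemma R_step {X} (f q : X -> X) a a' b c : R f a q a' b c -> R f a q a' (f b) (q c).
Proof.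
  intros [m [n [E1 E2]]]. exists (S m), n. simpl. rewrite !it_S', E1, E2; auto.
Qed.

Lemma R_in {X} (f q : X -> X) a a' b c : R f a q a' b c -> conn f a b /\ conn q a' c.
Proof. intros [m [n [E1 E2]]]; split; exists m, n; auto. Qed.

Inductive ctype := Topen | Tfwd | Tsz (n : nat).

Definition tp {X} (f : X -> X) (C : X -> Prop) (t : ctype) : Prop :=
  match t with Topen => open_cycle f C | Tfwd => forward_cycle f C | Tsz n => cycle_of_size f n C end.

Definition charD (t : ctype) (m n : nat) : Prop :=
  match t with Tsz k => m mod k = n mod k | _ => m = n end.
Definition charE (t : ctype) (m n : nat) : Prop :=
  match t with Tfwd => n <= m | _ => True end.

Lemma minper_conn {X} (f : X -> X) a b k : injective f -> minper f a k -> conn f a b -> minper f b k.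
Proof.
  intros Hf [H1 [H2 H3]] Hc. split; auto. split; [eapply period_conn; eauto|].
  intros q Hq Hqk E. apply (H3 q Hq Hqk). apply (period_conn f b a q Hf E). apply conn_sym; auto.
Qed.

Lemma preimage_iter {X} (f : X -> X) (C : X -> Prop) : invariant f C ->
  (forall c, C c -> exists b, f b = c) -> forall n c, C c -> exists b, C b /\ it f n b = c.
Proof.
  intros Hinv Hpre n; induction n; intros c Cc.
  - exists c; auto.
  - destruct (Hpre c Cc) as [c1 E]. assert (C c1) by (apply Hinv; rewrite E; auto).
    destruct (IHn c1 H) as [b [Cb Eb]]. exists b; split; auto. simpl; rewrite Eb; auto.
Qed.

Lemma shape_char {X} (f : X -> X) C t a : injective f -> tp f C t -> C a -> (forward_cycle f C -> nonimg f a) ->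
  (forall m n, it f m a = it f n a <-> charD t m n) /\
  (forall m n, (exists b, it f m a = it f n b) <-> charE t m n).
Proof.
  intros Hf Ht Ca Hfa. destruct t as [| |k]; simpl in *.
  - destruct Ht as [[HC Hinf] Hno]. rewrite (is_cycle_cyc f C a HC Ca) in *.
    assert (Hn : noper f a) by (apply infinite_noper; auto).
    split; [intros m n; split; [apply noper_inj; auto| intros ->; auto]|].
    intros m n; split; auto. intros _.
    destruct (preimage_iter f (cyc f a) (cyc_invariant f a)) with (n := n) (c := it f m a) as [b [_ Eb]].
    + intros c Cc. apply NNPP; intros Hne. apply Hno. exists c; split; auto. intros b E; apply Hne; eauto.
    + apply conn_it.
    + exists b; auto.
  - assert (Hs : nonimg f a) by (apply Hfa; auto).
    assert (Hn : noper f a) by (apply nonimg_noper; auto).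
    split; [intros m n; split; [apply noper_inj; auto| intros ->; auto]|].
    intros m n; split.
    + intros [b E]. destruct (le_lt_dec n m) as [Hl|Hl]; auto. exfalso.
      replace n with ((n - m) + m) in E by lia. rewrite it_add, it_comm in E.
      apply (it_inj f m Hf) in E. destruct (n - m) eqn:Enm; [lia|]. simpl in E. apply (Hs _ (eq_sym E)).
    + intros Hl. exists (it f (m - n) a). rewrite <- it_add. f_equal; lia.
  - apply (size_cycle_iff f k C Hf) in Ht as [a0 [-> H0]].
    pose proof (minper_conn f a0 a k Hf H0 Ca) as Hm. destruct Hm as [Hk [Hka Hmin]].
    split.
    + intros m n. rewrite (it_period_mod f a k m Hk Hka), (it_period_mod f a k n Hk Hka). split.
      * intros E. pose proof (Nat.mod_upper_bound m k ltac:(lia)). pose proof (Nat.mod_upper_bound n k ltac:(lia)).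
        destruct (lt_eq_lt_dec (m mod k) (n mod k)) as [[Hl|He]|Hl]; auto; exfalso.
        -- apply (Hmin (n mod k - m mod k)); try lia. apply it_period_diff; auto.
        -- apply (Hmin (m mod k - n mod k)); try lia. apply it_period_diff; auto.
      * intros ->; auto.
    + intros m n; split; auto; intros _. exists (it f (k * n - n + m) a).
      rewrite <- it_add. replace (n + (k * n - n + m)) with (k * n + m) by nia.
      rewrite it_add, it_comm, (Nat.mul_comm k n), (it_period_mult f a k n Hka); auto.
Qed.

Lemma shape_SE {X} (f q : X -> X) C D t a a' : injective f -> injective q ->
  tp f C t -> tp q D t -> C a -> (forward_cycle f C -> nonimg f a) ->
  D a' -> (forward_cycle q D -> nonimg q a') -> SE f a q a'.
Proof.
  intros Hf Hq HC HD Ca Ha Da' Ha'.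
  destruct (shape_char f C t a Hf HC Ca Ha) as [D1 E1].
  destruct (shape_char q D t a' Hq HD Da' Ha') as [D2 E2].
  split; intros m n; [rewrite D1, D2| rewrite E1, E2]; tauto.
Qed.

Lemma tp_cycle {X} (f : X -> X) C t : tp f C t -> is_cycle f C.
Proof. destruct t; simpl; intros H; apply H. Qed.

Lemma tp_unique {X} (f : X -> X) C t t' : tp f C t -> tp f C t' -> t = t'.
Proof.
  destruct t as [| |k]; destruct t' as [| |k']; simpl; unfold open_cycle, forward_cycle, cycle_of_size, infinite_cycle;
    intros H H'; try tauto.
  - exfalso. apply (proj2 (proj1 H)). eapply has_card_finite; apply H'.
  - exfalso. apply (proj2 (proj1 H)). eapply has_card_finite; apply H'.
  - exfalso. apply (proj2 (proj1 H')). eapply has_card_finite; apply H.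
  - exfalso. apply (proj2 (proj1 H')). eapply has_card_finite; apply H.
  - f_equal. eapply has_card_unique; [apply H|apply H'].
Qed.

Lemma tp_exists {X} (f : X -> X) C : injective f -> is_cycle f C -> exists t, tp f C t.
Proof.
  intros Hf HC. destruct (classic (finite_set C)) as [Hfin|Hinf].
  - destruct HC as [[a Ca] HH]. assert (HC : is_cycle f C) by (split; eauto).
    rewrite (is_cycle_cyc f C a HC Ca) in *.
    destruct (minper_exists f a (finite_cyc_period f a Hf Hfin)) as [k Hk].
    exists (Tsz k). simpl. apply size_cycle_iff; eauto.
  - destruct (classic (exists a, C a /\ forall b, f b <> a)).
    + exists Tfwd. split; [split|]; auto.
    + exists Topen. split; [split|]; auto.
Qed.

Definition eqwit {X} (P Q : (X -> Prop) -> Prop) (F : (X -> Prop) -> (X -> Prop)) : Prop :=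
  (forall S, P S -> Q (F S)) /\ (forall S S', P S -> P S' -> F S = F S' -> S = S') /\
  (forall T, Q T -> exists S, P S /\ F S = T).

Lemma equipotent_wit {X} (P Q : (X -> Prop) -> Prop) : equipotent P Q -> exists F, eqwit P Q F.
Proof.
  intros [F [H1 [H2 H3]]]. exists F. split; [auto|split].
  - intros S S' HS HS' E. apply seteq_eq, H2; auto. rewrite E; intros ?; tauto.
  - intros T HT. destruct (H3 T HT) as [S [HS E]]. exists S; split; auto. apply seteq_eq; auto.
Qed.

Lemma base_spec {X} (f : X -> X) C d : injective f -> is_cycle f C ->
  C (pick (fun a => C a /\ (forward_cycle f C -> nonimg f a)) d) /\
  (forward_cycle f C -> nonimg f (pick (fun a => C a /\ (forward_cycle f C -> nonimg f a)) d)).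
Proof.
  intros Hf HC. apply pick_spec.
  destruct (classic (forward_cycle f C)) as [H|H].
  - destruct H as [_ [s [Cs Hs]]]. exists s; split; auto.
  - destruct HC as [[a Ca] _]. exists a; split; auto; intros; contradiction.
Qed.

Theorem conjugacy {X} (f q : X -> X) (d : X) : injective f -> injective q ->
  (forall t, equipotent (fun C => tp f C t) (fun C => tp q C t)) ->
  exists H Hinv : X -> X, (forall a, Hinv (H a) = a) /\ (forall a, H (Hinv a) = a) /\
    (forall a, f a = Hinv (q (H a))).
Proof.
  intros Hf Hq HEQ.
  set (Fw := fun t => pick (eqwit (fun C => tp f C t) (fun C => tp q C t)) (fun S : X -> Prop => S)).
  assert (HFw : forall t, eqwit (fun C => tp f C t) (fun C => tp q C t) (Fw t))
    by (intros t; apply pick_spec, equipotent_wit, HEQ).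
  set (ty := fun C => pick (fun t => tp f C t) Topen).
  assert (Hty : forall C, is_cycle f C -> tp f C (ty C)) by (intros C HC; apply pick_spec, tp_exists; auto).
  set (Phi := fun C => Fw (ty C) C).
  assert (P1 : forall C, is_cycle f C -> tp q (Phi C) (ty C)) by (intros C HC; apply (HFw (ty C)), Hty; auto).
  assert (P2 : forall C C', is_cycle f C -> is_cycle f C' -> Phi C = Phi C' -> C = C').
  { intros C C' HC HC' E. pose proof (P1 C HC) as T1; pose proof (P1 C' HC') as T2.
    rewrite E in T1. pose proof (tp_unique q _ _ _ T1 T2) as Et.
    unfold Phi in E. rewrite <- Et in E.
    apply (proj1 (proj2 (HFw (ty C)))); [apply Hty; auto | rewrite Et; apply Hty; auto | exact E]. }
  assert (P3 : forall D, is_cycle q D -> exists C, is_cycle f C /\ Phi C = D).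
  { intros D HD. destruct (tp_exists q D Hq HD) as [t Ht].
    destruct (proj2 (proj2 (HFw t)) D Ht) as [C [HC E]]. exists C. split; [eapply tp_cycle; eauto|].
    unfold Phi. replace (ty C) with t; auto. symmetry; apply (tp_unique f C); auto. apply Hty; eapply tp_cycle; eauto. }
  set (bs := fun (h : X -> X) C => pick (fun a => C a /\ (forward_cycle h C -> nonimg h a)) d).
  assert (Hpair : forall C, is_cycle f C -> SE f (bs f C) q (bs q (Phi C)) /\ C (bs f C) /\ Phi C (bs q (Phi C))).
  { intros C HC. pose proof (base_spec f C d Hf HC) as [B1 B2].
    pose proof (P1 C HC) as HT. pose proof (base_spec q (Phi C) d Hq (tp_cycle _ _ _ HT)) as [B3 B4].
    split; [|split; auto]. eapply shape_SE; eauto. }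
  set (H := fun b => pick (fun c => R f (bs f (cyc f b)) q (bs q (Phi (cyc f b))) b c) d).
  assert (HR : forall b, R f (bs f (cyc f b)) q (bs q (Phi (cyc f b))) b (H b)).
  { intros b. apply pick_spec. destruct (Hpair (cyc f b) (cyc_is_cycle f b)) as [HS [Hb _]].
    apply R_total; auto. apply conn_sym; auto. }
  set (Psi := fun D => pick (fun C => is_cycle f C /\ Phi C = D) D).
  set (Hinv := fun c => pick (fun b => R f (bs f (Psi (cyc q c))) q (bs q (cyc q c)) b c) d).
  assert (HPsi : forall D, is_cycle q D -> is_cycle f (Psi D) /\ Phi (Psi D) = D)
    by (intros D HD; apply pick_spec, P3; auto).
  assert (HPsi2 : forall C, is_cycle f C -> Psi (Phi C) = C).
  { intros C HC. assert (HD : is_cycle q (Phi C)) by (eapply tp_cycle; apply P1; auto).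
    destruct (HPsi _ HD) as [A B]. apply P2; auto. }
  assert (Hcomm : forall b, H (f b) = q (H b)).
  { intros b. assert (E : cyc f (f b) = cyc f b) by (symmetry; apply cyc_eq, conn_f).
    pose proof (HR (f b)) as R1. rewrite E in R1. pose proof (R_step _ _ _ _ _ _ (HR b)) as R2.
    destruct (Hpair (cyc f b) (cyc_is_cycle f b)) as [HS _].
    exact (R_func f q _ _ _ _ _ Hf Hq HS R1 R2). }
  assert (HcycH : forall b, cyc q (H b) = Phi (cyc f b)).
  { intros b. destruct (Hpair (cyc f b) (cyc_is_cycle f b)) as [HS [_ HP]].
    destruct (R_in _ _ _ _ _ _ (HR b)) as [_ Hc].
    symmetry; apply is_cycle_cyc. eapply tp_cycle; apply P1, cyc_is_cycle.
    exact (invariant_conn q _ _ _ (proj1 (proj2 (tp_cycle q _ _ (P1 _ (cyc_is_cycle f b))))) Hc HP). }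
  assert (HK1 : forall b, Hinv (H b) = b).
  { intros b. unfold Hinv at 1. rewrite HcycH, HPsi2 by apply cyc_is_cycle.
    destruct (Hpair (cyc f b) (cyc_is_cycle f b)) as [HS _].
    assert (Hx := pick_spec (fun b0 => R f (bs f (cyc f b)) q (bs q (Phi (cyc f b))) b0 (H b)) d (ex_intro _ b (HR b))).
    exact (R_inj f q _ _ _ _ _ Hf Hq HS Hx (HR b)). }
  assert (HK2 : forall c, H (Hinv c) = c).
  { intros c. set (D := cyc q c). destruct (HPsi D (cyc_is_cycle q c)) as [HC EC].
    set (C := Psi D) in *.
    destruct (Hpair C HC) as [HS [B1 B2]]. rewrite EC in HS, B2.
    assert (Hex : exists b, R f (bs f C) q (bs q D) b c).
    { destruct (R_total q f (bs q D) (bs f C) c (SE_sym _ _ _ _ HS)) as [b Hb].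
      - apply conn_sym; exact B2.
      - exists b; apply R_swap; auto. }
    pose proof (pick_spec _ d Hex) as Hb. fold (Hinv c) in Hb. unfold Hinv in Hb. fold D C in Hb.
    set (b := Hinv c) in *.
    assert (Ecb : cyc f b = C).
    { destruct (R_in _ _ _ _ _ _ Hb) as [Hc _]. symmetry; apply is_cycle_cyc; auto.
      exact (invariant_conn f _ _ _ (proj1 (proj2 HC)) Hc B1). }
    pose proof (HR b) as Hb2. rewrite Ecb, EC in Hb2.
    exact (R_func f q _ _ _ _ _ Hf Hq HS Hb2 Hb). }
  exists H, Hinv. split; auto. split; auto. intros a. rewrite <- Hcomm, HK1; auto.
Qed.

Definition sw {X} (x y a : X) : X :=
  if eq_dec_cl a x then y else if eq_dec_cl a y then x else a.

Lemma sw_x {X} (x y : X) : sw x y x = y.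
Proof. unfold sw; destruct (eq_dec_cl x x); congruence. Qed.
Lemma sw_y {X} (x y : X) : sw x y y = x.
Proof. unfold sw; destruct (eq_dec_cl y x); destruct (eq_dec_cl y y); congruence. Qed.
Lemma sw_other {X} (x y a : X) : a <> x -> a <> y -> sw x y a = a.
Proof. unfold sw; intros; destruct (eq_dec_cl a x); destruct (eq_dec_cl a y); congruence. Qed.
Lemma sw_inv {X} (x y a : X) : sw x y (sw x y a) = a.
Proof.
  unfold sw; destruct (eq_dec_cl a x); destruct (eq_dec_cl a y); subst;
  repeat (destruct (eq_dec_cl _ _)); congruence.
Qed.
Lemma sw_moved {X} (x y a : X) : x <> y -> (sw x y a <> a <-> a = x \/ a = y).
Proof.
  intros Hxy. unfold sw; destruct (eq_dec_cl a x); destruct (eq_dec_cl a y); subst; split; intros; try tauto; congruence.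
Qed.

Lemma sw_perturb {X} (g : X -> X) x y : injective g ->
  perturb g (fun a => sw x y (g a)) (sw x y) (sw x y).
Proof. intros Hg; repeat split; auto; intros; apply sw_inv. Qed.

Lemma meets_sw {X} (x y : X) S : x <> y -> (meets (fun a => sw x y a <> a) S <-> S x \/ S y).
Proof.
  intros Hxy; split.
  - intros [a [Sa Ha]]. apply sw_moved in Ha as [->| ->]; auto.
  - intros [Sx|Sy]; [exists x|exists y]; split; auto; apply sw_moved; auto.
Qed.

Lemma orbit_same {X} (g p : X -> X) (x y : X) z : (forall a, p a = sw x y (g a)) ->
  (forall i, it g (S i) z <> x /\ it g (S i) z <> y) -> forall i, it p i z = it g i z.
Proof.
  intros Hp H i; induction i; simpl; auto. rewrite IHi, Hp.
  destruct (H i) as [H1 H2]. apply sw_other; auto.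
Qed.

Lemma orbit_infinite {X} (g p : X -> X) (x y : X) z T : injective g -> (forall a, p a = sw x y (g a)) ->
  noper g z -> (forall i, it g (S i) z <> x /\ it g (S i) z <> y) -> is_cycle p T -> T z -> ~ finite_set T.
Proof.
  intros Hg Hp Hn Ho HS Sz.
  assert (Hpi : injective p) by (apply (perturb_inj g p (sw x y) (sw x y)); split; auto; split; [|split]; auto; intros; apply sw_inv).
  rewrite (is_cycle_cyc p T z HS Sz). apply noper_infinite; auto.
  intros q Hq E. apply (Hn q Hq). rewrite <- (orbit_same g p x y z Hp Ho); auto.
Qed.

(* carve an n-cycle out of an infinite cycle *)
Lemma carve {X} (g : X -> X) (x : X) n : injective g -> noper g x -> 1 <= n ->
  let y := it g n x in let p := fun a => sw x y (g a) in
  minper p x n /\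
  (forall m S, cycle_of_size p m S <-> cycle_of_size g m S \/ (m = n /\ S = cyc p x)) /\
  ~ cycle_of_size g n (cyc p x).
Proof.
  intros Hg Hx Hn y p.
  assert (Hxy : x <> y).
  { intros E. apply (Hx n); [lia|]. unfold y in E; auto. }
  assert (Hpt : perturb g p (sw x y) (sw x y)) by (apply sw_perturb; auto).
  assert (Hp : injective p) by (eapply perturb_inj; eauto).
  assert (Hdist : forall i j, it g i x = it g j x -> i = j) by (intros i j E; exact (noper_inj g x i j Hg Hx E)).
  assert (Hlow : forall i, i < n -> it p i x = it g i x).
  { induction i; intros Hi; simpl; auto. rewrite IHi by lia. unfold p. apply sw_other.
    - intros E. change (it g (S i) x = it g 0 x) in E. apply Hdist in E; lia.
    - intros E. change (it g (S i) x = it g n x) in E. apply Hdist in E; lia. }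
  assert (Hmin : minper p x n).
  { split; [lia|split].
    - destruct n as [|n']; [lia|]. simpl. rewrite Hlow by lia. unfold p.
      change (g (it g n' x)) with (it g (S n') x). fold y. apply sw_y.
    - intros q Hq Hqn E. rewrite Hlow in E by lia. change (it g q x = it g 0 x) in E. apply Hdist in E; lia. }
  assert (Hyo : forall i, it g (S i) y <> x /\ it g (S i) y <> y).
  { intros i; unfold y; rewrite <- it_add; split; intros E.
    - change (it g (S i + n) x = it g 0 x) in E. apply Hdist in E; lia.
    - change (it g (S i + n) x = it g n x) in E. apply Hdist in E; lia. }
  assert (Hyn : noper g y) by (apply (noper_conn g x); auto; apply conn_it).
  assert (HCinf : forall S, is_cycle g S -> S x \/ S y -> ~ finite_set S).
  { intros S HS HSxy. assert (Sx : S x).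
    { destruct HSxy as [Sx|Sy]; auto. exact (invariant_conn g S y x (proj1 (proj2 HS)) (conn_sym _ _ _ (conn_it g x n)) Sy). }
    rewrite (is_cycle_cyc g S x HS Sx). apply noper_infinite; auto. }
  split; auto. split.
  - intros m S; split.
    + intros HS. destruct (classic (S x \/ S y)) as [Hm|Hm].
      * destruct Hm as [Sx|Sy].
        -- right. assert (E : S = cyc p x) by (apply is_cycle_cyc; auto; apply HS). split; auto.
           rewrite E in HS. eapply has_card_unique; [apply HS|apply minper_card; auto].
        -- exfalso. apply (orbit_infinite g p x y y S Hg (fun a => eq_refl) Hyn Hyo); [apply HS|auto|].
           eapply has_card_finite; apply HS.
      * left. apply (common_size g p (sw x y) (sw x y)); auto. rewrite meets_sw; auto.
    + intros [HS|[-> ->]].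
      * apply (common_size g p (sw x y) (sw x y)); auto. rewrite meets_sw; auto.
        intros Hm. apply (HCinf S); [apply HS|auto|]. eapply has_card_finite; apply HS.
      * split; [apply cyc_is_cycle|apply minper_card; auto].
  - intros [HS Hc]. apply (HCinf _ HS); [left; apply conn_refl|]. eapply has_card_finite; eauto.
Qed.

(* absorb a finite n-cycle into an infinite cycle *)
Lemma absorb {X} (g : X -> X) (x y : X) n : injective g -> minper g x n -> noper g y ->
  let p := fun a => sw x y (g a) in
  (forall m S, cycle_of_size p m S <-> cycle_of_size g m S /\ S <> cyc g x) /\
  cycle_of_size g n (cyc g x).
Proof.
  intros Hg Hx Hy p.
  assert (Hdisj : ~ conn g x y).
  { intros Hc. apply (noper_infinite g y Hg Hy). rewrite <- (cyc_eq g x y Hc).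
    destruct Hx as [H1 [H2 _]]. eapply period_finite; eauto. }
  assert (Hxy : x <> y) by (intros ->; apply Hdisj, conn_refl).
  assert (Hpt : perturb g p (sw x y) (sw x y)) by (apply sw_perturb; auto).
  assert (Hp : injective p) by (eapply perturb_inj; eauto).
  assert (Hyo : forall i, it g (S i) y <> x /\ it g (S i) y <> y).
  { intros i; split; intros E.
    - apply Hdisj. exists 0, (S i). auto.
    - apply (Hy (S i)); auto; lia. }
  destruct Hx as [Hn [Hxn Hxmin]].
  assert (Hlow : forall i, i < n -> it p i x = it g i x).
  { induction i; intros Hi; simpl; auto. rewrite IHi by lia. unfold p. apply sw_other.
    - intros E. apply (Hxmin (S i)); auto; lia.
    - intros E. apply Hdisj. exists (S i), 0; auto. }
  assert (Hxy' : it p n x = y).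
  { destruct n as [|n']; [lia|]. simpl. rewrite Hlow by lia. unfold p.
    change (g (it g n' x)) with (it g (S n') x). rewrite Hxn. apply sw_x. }
  assert (Hinfy : forall S, is_cycle p S -> S y -> ~ finite_set S).
  { intros S HS Sy. apply (orbit_infinite g p x y y S Hg (fun a => eq_refl) Hy Hyo HS Sy). }
  assert (Hmeet : forall S, is_cycle p S -> S x \/ S y -> S y).
  { intros S HS [Sx|Sy]; auto. rewrite <- Hxy'. apply (invariant_it p S (proj1 (proj2 HS))); auto. }
  split.
  - intros m S; split.
    + intros HS. destruct (classic (S x \/ S y)) as [Hm|Hm].
      * exfalso. apply (Hinfy S); [apply HS|apply Hmeet; auto; apply HS|]. eapply has_card_finite; apply HS.
      * split.
        -- apply (common_size g p (sw x y) (sw x y)); auto. rewrite meets_sw; auto.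
        -- intros ->. apply Hm; left; apply conn_refl.
    + intros [HS HB]. apply (common_size g p (sw x y) (sw x y)); auto. rewrite meets_sw; auto.
      intros [Sx|Sy].
      * apply HB. apply is_cycle_cyc; auto; apply HS.
      * apply (noper_infinite g y Hg Hy). rewrite <- (is_cycle_cyc g S y); [|apply HS|auto].
        eapply has_card_finite; apply HS.
  - split; [apply cyc_is_cycle|]. apply minper_card; auto. split; auto.
Qed.

Definition conjd {X} (f q H Hinv : X -> X) : Prop :=
  (forall a, Hinv (H a) = a) /\ (forall a, H (Hinv a) = a) /\ (forall a, f a = Hinv (q (H a))).

Lemma conjd_sym {X} (f q H Hinv : X -> X) : conjd f q H Hinv -> conjd q f Hinv H.
Proof. intros [H1 [H2 H3]]; split; auto; split; auto. intros a. rewrite H3, !H2; auto. Qed.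

Lemma conjd_it {X} (f q H Hinv : X -> X) n a : conjd f q H Hinv -> it f n a = Hinv (it q n (H a)).
Proof. intros [H1 [H2 H3]]; induction n; simpl; auto. rewrite IHn, H3, H2; auto. Qed.

Lemma conjd_conn {X} (f q H Hinv : X -> X) a c : conjd f q H Hinv -> conn f a c -> conn q (H a) (H c).
Proof.
  intros Hc [m [n E]]. exists m, n. rewrite !(conjd_it f q H Hinv) in E; auto.
  destruct Hc as [H1 [H2 _]]. rewrite <- (H2 (it q m (H a))), E, H2; auto.
Qed.

Definition img {X} (Hinv : X -> X) (S : X -> Prop) : X -> Prop := fun b => S (Hinv b).

Lemma img_back {X} (f q H Hinv : X -> X) S : conjd f q H Hinv -> img H (img Hinv S) = S.
Proof. intros [H1 _]. apply functional_extensionality; intros a; unfold img; rewrite H1; auto. Qed.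

Lemma conjd_cycle {X} (f q H Hinv : X -> X) S : conjd f q H Hinv -> is_cycle f S -> is_cycle q (img Hinv S).
Proof.
  intros Hc HS. apply cycle_iff in HS as [a [Sa ->]]. apply cycle_iff. exists (H a).
  destruct Hc as [H1 [H2 H3]] eqn:Ec. split; [unfold img; rewrite H1; apply conn_refl|].
  apply functional_extensionality; intros b; apply propositional_extensionality; unfold img, cyc; split; intros Hb.
  - rewrite <- (H2 b). apply (conjd_conn f q H Hinv); auto.
  - rewrite <- (H1 a). apply (conjd_conn q f Hinv H); auto using conjd_sym.
Qed.

Lemma conjd_finite {X} (f q H Hinv : X -> X) S : conjd f q H Hinv -> finite_set S -> finite_set (img Hinv S).
Proof.
  intros [H1 [H2 _]] [l Hl]. exists (map H l). intros b Hb. rewrite <- (H2 b). apply in_map, Hl, Hb.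
Qed.

Lemma conjd_card {X} (f q H Hinv : X -> X) S n : conjd f q H Hinv -> has_card S n -> has_card (img Hinv S) n.
Proof.
  intros [H1 [H2 _]] [l [Hl [Hn HS]]]. exists (map H l). split; [|split].
  - apply NoDup_map_inj; auto. intros x y _ _ E. rewrite <- (H1 x), E, H1; auto.
  - rewrite length_map; auto.
  - intros b; unfold img. rewrite HS. split; intros Hb.
    + rewrite <- (H2 b); apply in_map; auto.
    + apply in_map_iff in Hb as [a [<- Ha]]. rewrite H1; auto.
Qed.

Lemma conjd_nonimg {X} (f q H Hinv : X -> X) S : conjd f q H Hinv ->
  (exists a, S a /\ forall b, f b <> a) -> (exists a, img Hinv S a /\ forall b, q b <> a).
Proof.
  intros [H1 [H2 H3]] [a [Sa Ha]]. exists (H a). unfold img; rewrite H1; split; auto.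
  intros b E. apply (Ha (Hinv b)). rewrite H3, H2, E, H1; auto.
Qed.

Lemma conjd_props {X} (f q H Hinv : X -> X) S : conjd f q H Hinv ->
  (is_cycle f S <-> is_cycle q (img Hinv S)) /\ (finite_set S <-> finite_set (img Hinv S)) /\
  (forall n, has_card S n <-> has_card (img Hinv S) n) /\
  ((exists a, S a /\ forall b, f b <> a) <-> (exists a, img Hinv S a /\ forall b, q b <> a)).
Proof.
  intros Hc. pose proof (conjd_sym _ _ _ _ Hc) as Hc'. pose proof (img_back f q H Hinv S Hc) as Eb.
  split; [|split; [|split]].
  - split; [apply (conjd_cycle f q H Hinv); auto|]. intros HS. rewrite <- Eb. apply (conjd_cycle q f Hinv H); auto.
  - split; [apply (conjd_finite f q H Hinv); auto|]. intros HS. rewrite <- Eb. apply (conjd_finite q f Hinv H); auto.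
  - intros n; split; [apply (conjd_card f q H Hinv); auto|]. intros HS. rewrite <- Eb. apply (conjd_card q f Hinv H); auto.
  - split; [apply (conjd_nonimg f q H Hinv); auto|]. intros HS. rewrite <- Eb. apply (conjd_nonimg q f Hinv H); auto.
Qed.

Lemma conjd_equipotent {X} (f q H Hinv : X -> X) (Phi : (X -> X) -> (X -> Prop) -> Prop) : conjd f q H Hinv ->
  (forall S, Phi f S <-> Phi q (img Hinv S)) -> equipotent (Phi f) (Phi q).
Proof.
  intros Hc HP. exists (img Hinv). split; [|split].
  - intros S HS; apply HP; auto.
  - intros S S' _ _ E. apply seteq_eq in E. rewrite <- (img_back f q H Hinv S Hc), <- (img_back f q H Hinv S' Hc), E.
    intros ?; tauto.
  - intros T HT. exists (img H T). pose proof (img_back q f Hinv H T (conjd_sym _ _ _ _ Hc)) as E.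
    split; [apply HP; rewrite E; auto|rewrite E; intros ?; tauto].
Qed.

Lemma conjd_capprox {X} (f q H Hinv : X -> X) : conjd f q H Hinv ->
  card (open_cycle f) = card (open_cycle q) /\ card (forward_cycle f) = card (forward_cycle q) /\
  forall n, card (cycle_of_size f n) = card (cycle_of_size q n).
Proof.
  intros Hc. split; [|split; [|intros n]]; apply equipotent_card.
  - apply (conjd_equipotent f q H Hinv (fun h S => open_cycle h S)); auto; intros S;
    destruct (conjd_props f q H Hinv S Hc) as [P1 [P2 [P3 P4]]].
    unfold open_cycle, infinite_cycle. rewrite P1, P2, P4; tauto.
  - apply (conjd_equipotent f q H Hinv (fun h S => forward_cycle h S)); auto; intros S;
    destruct (conjd_props f q H Hinv S Hc) as [P1 [P2 [P3 P4]]].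
    unfold forward_cycle, infinite_cycle. rewrite P1, P2, P4; tauto.
  - apply (conjd_equipotent f q H Hinv (fun h S => cycle_of_size h n S)); auto; intros S;
    destruct (conjd_props f q H Hinv S Hc) as [P1 [P2 [P3 P4]]].
    unfold cycle_of_size. rewrite P1, P3; tauto.
Qed.

Lemma capprox_sym {X} (f g : X -> X) : capprox f g -> capprox g f.
Proof.
  intros [A [B [[N HN] D]]]. split; [auto|split; [auto|split]].
  - exists N; intros; symmetry; auto.
  - intros n Hn Hne. destruct (D n Hn); auto.
Qed.

Lemma capprox_trans {X} (f g h : X -> X) : capprox f g -> capprox g h -> capprox f h.
Proof.
  intros [A [B [[N HN] D]]] [A' [B' [[N' HN'] D']]]. split; [congruence|split; [congruence|split]].
  - exists (max N N'). intros n Hn. rewrite HN, HN'; auto; lia.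
  - intros n Hn Hne.
    destruct (classic (card (cycle_of_size f n) = card (cycle_of_size g n))) as [E|E].
    + rewrite E in *. apply D'; auto.
    + destruct (D n Hn E) as [D1 D2]. split; auto.
      destruct (classic (card (cycle_of_size g n) = card (cycle_of_size h n))) as [E'|E'].
      * congruence.
      * apply (D' n Hn E').
Qed.

Lemma approx_capprox {X} (f g : X -> X) : countably_infinite X -> injective f -> injective g ->
  (approx_fin f g <-> capprox f g).
Proof.
  intros HX Hf Hg.
  assert (Cnt : forall (h : X -> X) (P : (X -> Prop) -> Prop), (forall S, P S -> is_cycle h S) -> countable_fam P)
    by (intros h P HP; eapply cycles_countable; eauto).
  assert (EC : forall (P Q : (X -> Prop) -> Prop) (h h' : X -> X), (forall S, P S -> is_cycle h S) ->
            (forall S, Q S -> is_cycle h' S) -> (equipotent P Q <-> card P = card Q)).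
  { intros P Q h h' HP HQ. split; [apply equipotent_card|]. apply card_equipotent; eauto. }
  assert (Eo : forall (h : X -> X) S, open_cycle h S -> is_cycle h S) by (intros h S H; apply H).
  assert (Ef : forall (h : X -> X) S, forward_cycle h S -> is_cycle h S) by (intros h S H; apply H).
  assert (Es : forall (h : X -> X) n S, cycle_of_size h n S -> is_cycle h S) by (intros h n S H; apply H).
  unfold approx_fin, capprox.
  rewrite (EC _ _ f g (Eo f) (Eo g)), (EC _ _ f g (Ef f) (Ef g)).
  split; intros [A [B [[N HN] D]]]; split; auto; split; auto; split.
  - exists N; intros n Hn; apply (EC _ _ f g (Es f n) (Es g n)); auto.
  - intros n Hn Hne. rewrite <- (EC _ _ f g (Es f n) (Es g n)) in Hne. destruct (D n Hn Hne) as [D1 D2].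
    split; intros E; apply card_None in E; auto.
  - exists N; intros n Hn; apply (EC _ _ f g (Es f n) (Es g n)); auto.
  - intros n Hn Hne. rewrite (EC _ _ f g (Es f n) (Es g n)) in Hne. destruct (D n Hn Hne) as [D1 D2].
    split; apply NNPP; intros E; [apply D1|apply D2]; apply card_None; auto.
Qed.

Definition reach {X} (g q : X -> X) : Prop :=
  exists k kinv L, perturb g q k kinv /\ forall a, k a <> a -> In a L.

Lemma reach_refl {X} (g : X -> X) : injective g -> reach g g.
Proof. intros Hg. exists (fun a => a), (fun a => a), []. repeat split; auto. intros a H; congruence. Qed.

Lemma reach_trans {X} (g q r : X -> X) : reach g q -> reach q r -> reach g r.
Proof.
  intros [k [kinv [L [[Hg [H1 [H2 H3]]] HL]]]] [k' [kinv' [L' [[Hq [H1' [H2' H3']]] HL']]]].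
  exists (fun a => k' (k a)), (fun a => kinv (kinv' a)), (L ++ L'). split; [repeat split|].
  - auto.
  - intros a; rewrite H1', H1; auto.
  - intros a; rewrite H2, H2'; auto.
  - intros a; rewrite H3', H3; auto.
  - intros a Ha. apply in_or_app. destruct (classic (k a = a)) as [E|E].
    + right; apply HL'. rewrite E in Ha; auto.
    + left; apply HL; auto.
Qed.

Lemma reach_sw {X} (q : X -> X) x y : injective q -> reach q (fun a => sw x y (q a)).
Proof.
  intros Hq. exists (sw x y), (sw x y), [x; y]. split; [apply sw_perturb; auto|].
  intros a Ha. unfold sw in Ha. destruct (eq_dec_cl a x); [left; auto|]. destruct (eq_dec_cl a y); [right; left; auto|].
  congruence.
Qed.

Lemma reach_inj {X} (g q : X -> X) : reach g q -> injective q.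
Proof. intros [k [kinv [L [Hpt _]]]]. eapply perturb_inj; eauto. Qed.

Lemma reach_capprox {X} (g q : X -> X) (d : X) : reach g q -> capprox g q.
Proof. intros [k [kinv [L [Hpt HL]]]]. eapply perturb_capprox; eauto. Qed.

Lemma card_zero {X} (P : (X -> Prop) -> Prop) : card P = Some 0 <-> forall S, ~ P S.
Proof.
  rewrite card_Some. split.
  - intros [l [_ [Hl HP]]] S HS. destruct l; [|discriminate]. apply HP in HS; inversion HS.
  - intros H. exists []. split; [constructor|split; auto]. intros S; split; [intros HS; exfalso; eapply H; eauto|intros []].
Qed.

Lemma card_size0 {X} (h : X -> X) : card (cycle_of_size h 0) = Some 0.
Proof.
  apply card_zero. intros S [[[a Sa] _] [l [_ [Hl HS]]]]. destruct l; [|discriminate]. apply HS in Sa; inversion Sa.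
Qed.

Lemma infinite_from {X} (f q : X -> X) : injective q -> capprox f q -> (exists S, infinite_cycle f S) ->
  exists y, noper q y.
Proof.
  intros Hq [Ao [Af _]] [S HS].
  destruct (classic (exists a, S a /\ forall b, f b <> a)) as [Hn|Hn].
  - assert (HF : forward_cycle f S) by (split; auto).
    assert (card (forward_cycle q) <> Some 0) by (rewrite <- Af; intros E; exact (proj1 (card_zero _) E S HF)).
    destruct (classic (exists T, forward_cycle q T)) as [[T HT]|Hno]; [|exfalso; apply H, (proj2 (card_zero _)); eauto].
    destruct (proj1 (infinite_cycle_iff q T Hq) (proj1 HT)) as [y [_ Hy]]; eauto.
  - assert (HF : open_cycle f S) by (split; auto).
    assert (card (open_cycle q) <> Some 0) by (rewrite <- Ao; intros E; exact (proj1 (card_zero _) E S HF)).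
    destruct (classic (exists T, open_cycle q T)) as [[T HT]|Hno]; [|exfalso; apply H, (proj2 (card_zero _)); eauto].
    destruct (proj1 (infinite_cycle_iff q T Hq) (proj1 HT)) as [y [_ Hy]]; eauto.
Qed.

Definition dd (o1 o2 : option nat) : nat :=
  match o1, o2 with Some a, Some b => (a - b) + (b - a) | _, _ => 0 end.

Lemma sum_le_in (h : nat -> nat) l x : In x l -> h x <= list_sum (map h l).
Proof. induction l as [|b l IH]; simpl; [intros []|intros [->|Hx]; [lia|specialize (IH Hx); lia]]. Qed.

Lemma sum_lt (h h' : nat -> nat) N n : n < N -> h' n < h n -> (forall m, m <> n -> h' m = h m) ->
  list_sum (map h' (seq 0 N)) < list_sum (map h (seq 0 N)).
Proof.
  intros HnN Hlt Heq. induction N; [lia|]. rewrite !seq_S, !map_app, !list_sum_app. simpl.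
  destruct (Nat.eq_dec n N) as [->|Hne].
  - assert (list_sum (map h' (seq 0 N)) = list_sum (map h (seq 0 N))).
    { f_equal. apply map_ext_in. intros a Ha. apply in_seq in Ha. apply Heq; lia. }
    lia.
  - rewrite (Heq N) by auto. specialize (IHN ltac:(lia)). lia.
Qed.

Lemma matching {X} (f g : X -> X) (d : X) : countably_infinite X -> injective f -> injective g ->
  capprox f g -> (exists S, infinite_cycle f S) ->
  exists q, reach g q /\ forall n, card (cycle_of_size f n) = card (cycle_of_size q n).
Proof.
  intros HX Hf Hg Hc Hinf. destruct Hc as [A0 [B0 [[N HN] D0]]].
  set (Inv := fun q : X -> X => reach g q /\ capprox f q /\ forall n, N <= n -> card (cycle_of_size f n) = card (cycle_of_size q n)).
  set (msr := fun q : X -> X => list_sum (map (fun n => dd (card (cycle_of_size f n)) (card (cycle_of_size q n))) (seq 0 N))).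
  assert (Main : forall M q, Inv q -> msr q = M -> exists r, reach g r /\ forall n, card (cycle_of_size f n) = card (cycle_of_size r n)).
  { intros M. induction M as [M IH] using (well_founded_induction lt_wf). intros q [Rq [Cq Nq]] Hm.
    pose proof (reach_inj g q Rq) as Hq.
    destruct (classic (exists n, n < N /\ dd (card (cycle_of_size f n)) (card (cycle_of_size q n)) > 0)) as [[n [HnN Hdd]]|Hno].
    - destruct (card (cycle_of_size f n)) as [a|] eqn:Ea; [|simpl in Hdd; lia].
      destruct (card (cycle_of_size q n)) as [b|] eqn:Eb; [|simpl in Hdd; lia]. simpl in Hdd.
      assert (Hn1 : 1 <= n).
      { destruct n; [|lia]. rewrite card_size0 in Ea, Eb. injection Ea; injection Eb; intros; lia. }
      destruct (infinite_from f q Hq Cq Hinf) as [y Hy].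
      assert (Step : forall r, reach q r -> card (cycle_of_size q n) <> card (cycle_of_size r n) ->
                 dd (Some a) (card (cycle_of_size r n)) < dd (Some a) (Some b) ->
                 (forall m, m <> n -> card (cycle_of_size q m) = card (cycle_of_size r m)) ->
                 exists r', reach g r' /\ forall n, card (cycle_of_size f n) = card (cycle_of_size r' n)).
      { intros r Rr Hne Hlt Hoth.
        assert (Hlt' : msr r < M).
        { rewrite <- Hm. unfold msr. apply (sum_lt _ _ N n); auto.
          + rewrite Ea, Eb; auto.
          + intros m Hmn. rewrite Hoth; auto. }
        apply (IH (msr r) Hlt' r); [|reflexivity].
        split; [eapply reach_trans; eauto|split].
          + eapply capprox_trans; [exact Cq|]. apply (reach_capprox q r d Rr).
          + intros m Hm'. rewrite Nq, Hoth; auto; lia. }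
      destruct (lt_dec b a) as [Hba|Hab].
      +
        destruct (carve q y n Hq Hy Hn1) as [_ [Hsz Hnot]].
        set (r := fun a0 => sw y (it q n y) (q a0)) in *.
        assert (Er : card (cycle_of_size r n) = Some (S b)).
        { rewrite (card_add1 (cycle_of_size q n) (cycle_of_size r n) (cyc r y)); auto.
          - rewrite Eb; auto.
          - intros S; rewrite Hsz; intuition. }
        apply (Step r); [apply reach_sw; auto| rewrite Eb, Er; intros E; injection E; lia| rewrite Er; unfold dd; lia|].
        intros m Hmn. apply card_ext. intros S. rewrite Hsz. intuition.
      +
        assert (Hb0 : card (cycle_of_size q n) <> Some 0) by (rewrite Eb; intros E; injection E; lia).
        destruct (classic (exists S, cycle_of_size q n S)) as [[S HS]|Hno]; [|exfalso; apply Hb0, (proj2 (card_zero _)); eauto].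
        apply (size_cycle_iff q n S Hq) in HS as [x [-> Hx]].
        destruct (absorb q x y n Hq Hx Hy) as [Hsz HB].
        set (r := fun a0 => sw x y (q a0)) in *.
        assert (Er : card (cycle_of_size q n) = option_map S (card (cycle_of_size r n))).
        { apply (card_add1 (cycle_of_size r n) (cycle_of_size q n) (cyc q x)).
          - intros S; rewrite Hsz. split; [intros HS; destruct (classic (S = cyc q x)); auto|intros [[HS _]| ->]; auto].
          - rewrite Hsz. tauto. }
        rewrite Eb in Er. destruct (card (cycle_of_size r n)) as [c|] eqn:Ec; simpl in Er; [|discriminate].
        injection Er; intros Ebc.
        apply (Step r); [apply reach_sw; auto| rewrite Eb, Ec; intros E; injection E; lia| rewrite Ec; unfold dd; lia|].
        intros m Hmn. apply card_ext. intros S. rewrite Hsz. split; [|tauto]. intros HS; split; auto.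
        intros ->. apply Hmn. eapply has_card_unique; [apply HS|apply HB].
    - exists q; split; auto. intros n. destruct (le_lt_dec N n) as [Hl|Hl]; [apply Nq; auto|].
      destruct n as [|n]; [rewrite !card_size0; auto|].
      apply NNPP; intros Hne. destruct Cq as [_ [_ [_ Dq]]]. destruct (Dq (S n) ltac:(lia) Hne) as [D1 D2].
      destruct (card (cycle_of_size f (S n))) as [a|] eqn:Ea; [|contradiction].
      destruct (card (cycle_of_size q (S n))) as [b|] eqn:Eb; [|contradiction].
      apply Hno. exists (S n); split; auto. rewrite Ea, Eb. simpl. assert (a <> b) by congruence. lia. }
  apply (Main (msr g) g); [|reflexivity]. split; [apply reach_refl; auto|split].
  - split; auto. split; auto. split; [exists N; auto|auto].
  - auto.
Qed.

Theorem mainTheorem11 (Ω : Type) (HΩ : countably_infinite Ω) (f g : Ω -> Ω)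
  (Hf : injective f) (Hg : injective g)
  (Hfi : exists S, infinite_cycle f S) (Hgi : exists S, infinite_cycle g S) :
  approx_fin f g <->
  exists (h hinv h1 h2 : Ω -> Ω),
    (forall a, hinv (h a) = a) /\ (forall a, h (hinv a) = a) /\
    fin_perm h1 /\ fin_perm h2 /\
    (forall a, f a = hinv (h2 (g (h1 (h a))))).
Proof.
  pose proof HΩ as [e [_ Hs]]. destruct (Hs 0) as [d _].
  rewrite (approx_capprox f g HΩ Hf Hg). split.
  - intros Hc. destruct (matching f g d HΩ Hf Hg Hc Hfi) as [q [Rq Hn]].
    pose proof (reach_inj g q Rq) as Hq.
    assert (Cfq : capprox f q) by (eapply capprox_trans; [exact Hc|]; apply (reach_capprox g q d Rq)).
    assert (HEQ : forall t, equipotent (fun C => tp f C t) (fun C => tp q C t)).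
    { intros t. destruct Cfq as [A [B _]].
      assert (Cnt : forall (h : Ω -> Ω) (P : (Ω -> Prop) -> Prop), (forall S, P S -> is_cycle h S) -> countable_fam P)
        by (intros h P HP; eapply cycles_countable; eauto).
      destruct t as [| |n]; simpl; apply card_equipotent; auto;
        try (apply (Cnt f); intros S HS; apply HS); try (apply (Cnt q); intros S HS; apply HS). }
    destruct (conjugacy f q d Hf Hq HEQ) as [H [Hinv [H1 [H2 H3]]]].
    destruct Rq as [k [kinv [L [[_ [K1 [K2 K3]]] HL]]]].
    exists H, Hinv, (fun a => a), k. split; auto. split; auto. split; [|split].
    + split; [exists (fun a => a); split; auto|]. exists []. intros a Ha; apply Ha; auto.
    + split; [exists kinv; split; auto|]. exists L; auto.
    + intros a. rewrite H3, K3. reflexivity.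
  - intros [h [hinv [h1 [h2 [E1 [E2 [P1 [P2 Ef]]]]]]]].
    destruct P1 as [[h1i [F1 F1']] [L1 HL1]]. destruct P2 as [[h2i [F2 F2']] [L2 HL2]].
    set (q := fun a => h1 (h2 (g a))).
    assert (Hpt : perturb g q (fun a => h1 (h2 a)) (fun a => h2i (h1i a))).
    { split; auto. split; [intros a; rewrite F1, F2; auto|split; [intros a; rewrite F2', F1'; auto|reflexivity]]. }
    assert (Cgq : capprox g q).
    { apply (perturb_capprox g q _ _ (L1 ++ L2) d Hpt). intros a Ha. apply in_or_app.
      destruct (classic (h2 a = a)) as [E|E].
      + left. apply HL1. rewrite E in Ha; auto.
      + right. apply HL2; auto. }
    assert (Hcj : conjd f q (fun a => h1 (h a)) (fun b => hinv (h1i b))).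
    { split; [intros a; rewrite F1, E1; auto|split; [intros a; rewrite E2, F1'; auto|]].
      intros a. unfold q. rewrite F1. apply Ef. }
    destruct (conjd_capprox _ _ _ _ Hcj) as [A [B Cn]].
    assert (Cfq : capprox f q).
    { split; auto. split; auto. split; [exists 0; auto|]. intros n _ Hne; exfalso; apply Hne; auto. }
    eapply capprox_trans; [exact Cfq|]. apply capprox_sym; auto.
Qed.
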